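(* Let $n$ be an integer such that either $n>4$ and $n$ is prime, or $4\leq n\leq 10$. Then there is no perfect single-error-correcting code in $S_n$ with respect to the Kendall's $\tau$-distance; that is, there is no subset $\mathcal{C}\subseteq S_n$ such that for every $\pi\in S_n$ there exists exactly one $\sigma\in\mathcal{C}$ with $d_K(\sigma,\pi)\leq 1$.
   Context: $S_n$ denotes the set of all permutations of $[n]=\{1,\dots,n\}$, written $\sigma=[\sigma(1),\dots,\sigma(n)]$, where $\sigma(i)$ is the element in position $i$. An adjacent transposition applied to $\sigma$ exchanges the entries in positions $i$ and $i+1$ for some $1\leq i\leq n-1$. The Kendall's $\tau$-distance $d_K(\sigma,\pi)$ is the minimum number of adjacent transpositions needed to transform $\sigma$ into $\pi$. A perfect single-error-correcting code is a subset $\mathcal{C}\subseteq S_n$ such that every permutation of $S_n$ is at distance at most $1$ from exactly one element of $\mathcal{C}$. *)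

(* Defs.v *)
From mathcomp Require Import all_boot all_fingroup.
Set Implicit Arguments. Unset Strict Implicit. Unset Printing Implicit Defensive.

(* S_n is modelled as {perm 'I_n}; positions and values are 0..n-1. *)

(* Apply the adjacent transposition exchanging the entries in positions
   i and i+1 (for i+1 < n; otherwise no-op, never used below). *)
Definition adj_swap (n : nat) (s : {perm 'I_n}) (i : nat) : {perm 'I_n} :=
  match insub i, insub i.+1 with
  | Some a, Some b => (tperm a b * s)%g   (* (tperm a b * s) x = s (tperm a b x) *)
  | _, _ => s
  end.

Definition apply_swaps (n : nat) (s : {perm 'I_n}) (l : seq nat) : {perm 'I_n} :=
  foldl (@adj_swap n) s l.

(* d_K(s, p) <= k : p is obtained from s by at most k adjacent transpositions.
   Since d_K is the minimum such number, d_K(s,p) <= k iff this holds. *)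
Definition dK_le (n : nat) (s p : {perm 'I_n}) (k : nat) : Prop :=
  exists l : seq nat, [/\ size l <= k, all (fun i => i.+1 < n) l & apply_swaps s l = p].

Definition perfect_code1 (n : nat) (C : {set {perm 'I_n}}) : Prop :=
  forall p : {perm 'I_n}, exists! s : {perm 'I_n}, s \in C /\ dK_le s p 1.

(* Main.v *)
Require Import Defs.
From mathcomp Require Import all_boot all_fingroup.
From mathcomp Require Import zify.
From Stdlib Require Import NArith FMapPositive.
Set Implicit Arguments. Unset Strict Implicit. Unset Printing Implicit Defensive.

(* Proof strategy.
   * Generic counting: for a perfect code C, sum_p w p = sum_{c in C} sum_{j<n} w (ball_j c).
   * n prime > 4: track the position of value 0; the resulting linear system forces
     n * x = (n-1)!, impossible since n does not divide (n-1)!.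
   * n in {4,6,8,9,10}: track colour patterns (a Young-subgroup quotient); a modular
     certificate y (found by computer, checked here by vm_compute) with
     sum_j y(ball_j s) = 0 mod q^d for all states s, while the total sum has too small
     q-adic valuation. *)


Section General.
Variable n : nat.
Implicit Types c p : {perm 'I_n}.
Hypothesis n_gt0 : 0 < n.

Lemma adj_swapE c j (hj : j.+1 < n) :
  adj_swap c j = (tperm (Ordinal (ltnW hj)) (Ordinal hj) * c)%g.
Proof.
rewrite /adj_swap (insubT (fun k => k < n) (ltnW hj)) (insubT (fun k => k < n) hj).
by congr (tperm _ _ * c)%g; apply: val_inj.
Qed.

Definition ballf c (j : nat) : {perm 'I_n} :=
  if j is j'.+1 then adj_swap c j' else c.

Lemma dK1P c p : dK_le c p 1 <-> exists2 j, j < n & p = ballf c j.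
Proof.
split.
  case=> [[|i [|k l]]] [] //=.
    by move=> _ _ <-; exists 0.
  rewrite andbT => _ hi <-; exists i.+1 => //.
move=> [[|j] hj ->].
  by exists [::].
by exists [:: j]; rewrite /= hj.
Qed.

Lemma ballf_inj c j k : j < n -> k < n -> ballf c j = ballf c k -> j = k.
Proof.
have key : forall j k (hj : j.+1 < n) (hk : k.+1 < n),
  tperm (Ordinal (ltnW hj)) (Ordinal hj) = tperm (Ordinal (ltnW hk)) (Ordinal hk) -> j = k.
  move=> j' k' hj hk /(congr1 (fun q : {perm 'I_n} => val (q (Ordinal (ltnW hj))))).
  rewrite tpermL /=; case: tpermP => [[->]|[]|] //=.
  - by move=> ->; lia.
  - by move=> _ _ E; lia.
have key1 : forall k (hk : k.+1 < n),
  tperm (Ordinal (ltnW hk)) (Ordinal hk) <> 1%g.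
  move=> k' hk /(congr1 (fun q : {perm 'I_n} => val (q (Ordinal (ltnW hk))))).
  by rewrite tpermL perm1 /=; lia.
case: j k => [|j] [|k] //= hj hk; rewrite ?adj_swapE.
- move=> E; case: (key1 k hk); apply: (mulIg c); by rewrite mul1g -E.
- move=> E; case: (key1 j hj); apply: (mulIg c); by rewrite mul1g E.
- by move=> /mulIg /key ->.
Qed.

Lemma ball_sum (C : {set {perm 'I_n}}) (hC : perfect_code1 C) (w : {perm 'I_n} -> nat) :
  \sum_p w p = \sum_(c in C) \sum_(j < n) w (ballf c j).
Proof.
have E : forall p, \sum_(c in C) \sum_(j < n) (p == ballf c j) = 1.
  move=> p; have [c0 [[c0C dc0] U]] := hC p.
  rewrite (bigD1 c0) //= [X in _ + X]big1 ?addn0.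
    have [j0 hj0 Ep] := (dK1P c0 p).1 dc0.
    rewrite (bigD1 (Ordinal hj0)) //= -Ep eqxx big1 // => k nk.
    apply/eqP; case E: (p == ballf c0 k) => //; exfalso.
    move/eqP: E; rewrite Ep => /ballf_inj E.
    have := E hj0 (ltn_ord k); move: nk => /eqP nk ek; apply: nk; apply: val_inj => /=; by rewrite ek.
  move=> c /andP [cC nc]; apply: big1 => j _.
  apply/eqP; case E: (p == ballf c j) => //; exfalso.
  move/eqP: nc; apply; symmetry; apply: U; split => //.
  apply/dK1P; exists j => //; exact/eqP.
transitivity (\sum_p (\sum_(c in C) \sum_(j < n) (p == ballf c j)) * w p).
  by apply: eq_bigr => p _; rewrite E mul1n.
rewrite (eq_bigr (fun p => \sum_(c in C) \sum_(j < n) (p == ballf c j) * w p)); last first.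
  by move=> p _; rewrite big_distrl /=; apply: eq_bigr => c _; rewrite big_distrl.
rewrite exchange_big /=; apply: eq_bigr => c _.
rewrite exchange_big /=; apply: eq_bigr => j _.
rewrite (bigD1 (ballf c j)) //= eqxx mul1n big1 ?addn0 // => p /negbTE ->.
by rewrite mul0n.
Qed.
End General.


Section Color.
Variable n : nat.
Variable b : seq nat.
Hypothesis size_b : size b = n.
Implicit Types c p q : {perm 'I_n}.

Definition fS p : seq nat := [seq nth 0 b (p i) | i <- enum 'I_n].

Definition swapS (j : nat) (s : seq nat) : seq nat :=
  mkseq (fun i => nth 0 s (if i == j then j.+1 else if i == j.+1 then j else i)) (size s).
Definition ballS (s : seq nat) (j : nat) := if j is j'.+1 then swapS j' s else s.

Lemma size_fS p : size (fS p) = n.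
Proof. by rewrite size_map size_enum_ord. Qed.

Lemma nth_fS p k (hk : k < n) : nth 0 (fS p) k = nth 0 b (p (Ordinal hk)).
Proof.
rewrite (nth_map (Ordinal hk)) ?size_enum_ord //; congr (nth 0 b (p _)).
by apply: val_inj; rewrite /= nth_enum_ord.
Qed.

Lemma fS1 : fS 1 = b.
Proof.
rewrite /fS (eq_map (g := nth 0 b \o val)); last by move=> i; rewrite perm1.
by rewrite map_comp val_enum_ord -size_b -/(mkseq _ _) mkseq_nth.
Qed.

Lemma fS_ball c j : j < n -> fS (ballf c j) = ballS (fS c) j.
Proof.
case: j => [|j] //= hj; rewrite adj_swapE.
apply: (@eq_from_nth _ 0); first by rewrite size_mkseq !size_fS.
move=> i; rewrite size_fS => hi; rewrite nth_mkseq ?size_fS //.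
have hk : (if i == j then j.+1 else if i == j.+1 then j else i) < n.
  by case: ifP => _ //; case: ifP => // _; apply: ltnW.
rewrite (nth_fS _ hi) (nth_fS _ hk) permM; congr (nth 0 b (c _)).
apply: val_inj => /=; case: tpermP => [/(congr1 val) /= E|/(congr1 val) /= E|na nb] /=.
- by rewrite E eqxx.
- by rewrite E; case: eqP => [|_]; [lia | rewrite eqxx].
- have ni : i != j by apply/eqP => E; apply: na; apply: val_inj.
  have ni' : i != j.+1 by apply/eqP => E; apply: nb; apply: val_inj.
  by rewrite (negbTE ni) (negbTE ni').
Qed.

Lemma fS_eqP p q : fS p = fS q <-> (forall i, nth 0 b (p i) = nth 0 b (q i)).
Proof.
split=> [E i|E]; last by apply: eq_map.
have := congr1 (nth 0 ^~ (val i)) E; rewrite !(nth_fS _ (ltn_ord i)).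
by have -> : Ordinal (ltn_ord i) = i by apply: val_inj.
Qed.

Lemma fS_perm p : perm_eq (fS p) b.
Proof.
have -> : fS p = map (fun i : 'I_n => nth 0 b i) (map p (enum 'I_n)) by rewrite -map_comp.
rewrite -[X in perm_eq _ X]fS1.
have -> : fS 1 = map (fun i : 'I_n => nth 0 b i) (enum 'I_n) by apply: eq_map => i; rewrite perm1.
apply: perm_map; apply: uniq_perm; rewrite ?enum_uniq //.
  by rewrite map_inj_uniq ?enum_uniq //; apply: perm_inj.
move=> x; rewrite mem_enum; apply/mapP; exists (p^-1 x)%g; by rewrite ?mem_enum ?permKV.
Qed.

Lemma fS_surj s : perm_eq s b -> exists p, fS p = s.
Proof.
move=> hs.
have ht : perm_eq s [tuple nth 0 b i | i < n].
  by rewrite /= (eq_map (g := nth 0 b \o val)) // map_comp val_enum_ord -size_b -/(mkseq _ _) mkseq_nth.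
have [p Ep] := tuple_permP ht; exists p.
rewrite Ep /= /fS; apply: eq_map => i; by rewrite tnth_mktuple.
Qed.

Definition Fib s := \sum_(q | fS q == s) 1.

Lemma Fib_const p : Fib (fS p) = Fib b.
Proof.
rewrite -[in RHS](fS1) /Fib.
rewrite (reindex_inj (mulgI p)) /=; apply: eq_bigl => q.
apply/eqP/eqP; rewrite !fS_eqP => E i.
  by have := E (p^-1 i)%g; rewrite permM permKV perm1.
by rewrite permM E perm1.
Qed.

Lemma sum_fS (g : seq nat -> nat) :
  \sum_p g (fS p) = Fib b * \sum_(s <- permutations b) g s.
Proof.
set L := permutations b.
have UL : uniq L by apply: permutations_uniq.
have pick : forall x, x \in L -> \sum_(s <- L) (x == s) * g s = g x.
  move=> x xL; rewrite (big_rem x xL) /= eqxx mul1n big_seq big1 ?addn0 //.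
  move=> s sr; case: eqP => [E|]; last by rewrite mul0n.
  by move: sr; rewrite -E (mem_rem_uniqF _ UL).
transitivity (\sum_p \sum_(s <- L) (fS p == s) * g s).
  by apply: eq_bigr => p _; rewrite pick // mem_permutations fS_perm.
rewrite exchange_big /= big_distrr /= big_seq [RHS]big_seq; apply: eq_bigr => s sL.
rewrite -big_distrl /= -/(Fib s) mulnC.
move: sL; rewrite mem_permutations => /fS_surj [p <-].
have FE : \sum_i (fS i == fS p) = Fib (fS p).
  by rewrite /Fib [RHS]big_mkcond; apply: eq_bigr => i _; case: eqP.
by rewrite FE Fib_const mulnC.
Qed.

Lemma Fib_fact : Fib b * size (permutations b) = n`!.
Proof.
have := sum_fS (fun _ => 1); rewrite [X in _ = _ * X]sum1_size => <-.
by rewrite -card_Sn -sum1_card.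
Qed.
End Color.


Lemma code_contra n (b : seq nat) (y : seq nat -> nat) (q d : nat) :
  0 < n -> size b = n -> prime q ->
  all (fun s => sumn [seq y (ballS s j) | j <- iota 0 n] %% q ^ d == 0) (permutations b) ->
  0 < sumn (map y (permutations b)) ->
  logn q (n`!) - logn q (size (permutations b)) + logn q (sumn (map y (permutations b))) < d ->
  ~ exists C : {set {perm 'I_n}}, perfect_code1 C.
Proof.
move=> n0 sb pq chk Tpos lg [C hC].
set T := sumn _ in Tpos lg; set K := size _ in lg.
have H1 : \sum_(p : {perm 'I_n}) y (fS b p) = \sum_(c in C) \sum_(j < n) y (fS b (ballf c j)) :=
  ball_sum n0 hC (fun p => y (fS b p)).
have H2 : q ^ d %| \sum_(p : {perm 'I_n}) y (fS b p).
  rewrite H1; apply: dvdn_sum => c _.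
  have : fS b c \in permutations b by rewrite mem_permutations fS_perm.
  move/(allP chk) => hm.
  rewrite (eq_bigr (fun j : 'I_n => y (ballS (fS b c) j))); last by move=> j _; rewrite fS_ball.
  rewrite /dvdn; move: hm; rewrite sumnE big_map -(big_mkord xpredT (fun j => y (ballS (fS b c) j))).
  by rewrite /index_iota subn0.
have H3 : \sum_(p : {perm 'I_n}) y (fS b p) = Fib n b b * T by rewrite sum_fS // /T sumnE big_map.
have H4 := Fib_fact sb; rewrite -/K in H4.
have Fpos : 0 < Fib n b b by move: (fact_gt0 n); rewrite -H4 muln_gt0 => /andP [].
have Kpos : 0 < K by move: (fact_gt0 n); rewrite -H4 muln_gt0 => /andP [].
have L1 : logn q (n`!) = logn q (Fib n b b) + logn q K by rewrite -H4 lognM.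
move: H2; rewrite H3 pfactor_dvdn ?muln_gt0 ?Fpos ?Tpos // lognM // => H2.
lia.
Qed.

Definition enc (s : seq nat) : N := foldl (fun acc d => (acc * 16 + N.of_nat d)%N) 0%N s.
Definition mkmap (l : list (positive * nat)) : PositiveMap.t nat :=
  foldl (fun m kv => PositiveMap.add kv.1 kv.2 m) (PositiveMap.empty nat) l.
Definition ylook (m : PositiveMap.t nat) (s : seq nat) : nat :=
  match PositiveMap.find (N.succ_pos (enc s)) m with Some v => v | None => 0 end.


Section Prime.
Variable n : nat.
Hypothesis n_gt4 : 4 < n.
Let n_gt0 : 0 < n. Proof. by apply: leq_trans n_gt4. Qed.
Let z : 'I_n := Ordinal n_gt0.
Implicit Types c p : {perm 'I_n}.
Implicit Types s t : 'I_n.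

Definition pos p : 'I_n := (p^-1)%g z.

Definition gj (j : nat) t : 'I_n :=
  if j is j'.+1 then
    (if insub j' is Some a then if insub j'.+1 is Some b then tperm a b t else t else t)
  else t.

Lemma gjK j : involutive (gj j).
Proof.
case: j => [|j] t //=.
case: insub => [a|] //; case: insub => [b|] //; exact: tpermK.
Qed.

Lemma pos_ball c j : j < n -> pos (ballf c j) = gj j (pos c).
Proof.
case: j => [|j] //= hj; rewrite adj_swapE /pos /gj.
rewrite (insubT (fun k => k < n) (ltnW hj)) (insubT (fun k => k < n) hj).
rewrite invMg permM tpermV; congr (tperm _ _ _); by apply: val_inj.
Qed.

Definition N s t := \sum_(j < n) (gj j s == t).

Lemma sumN t : \sum_s N s t = n.
Proof.
rewrite /N exchange_big /= -[RHS]card_ord -sum1_card; apply: eq_bigr => j _.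
rewrite (bigD1 (gj j t)) //= gjK eqxx big1 // => s ns.
apply/eqP; rewrite eqb0; apply: contra ns => /eqP <-; by rewrite gjK.
Qed.

Lemma Ntt t : n - 2 <= N t t.
Proof.
have E : forall j, (gj j t == t) + ((j == t.+1 :> nat) + (j == t :> nat)) >= 1.
  case=> [|j] /=; first by rewrite eqxx.
  case: insubP => [a ha va|]; last by rewrite eqxx.
  case: insubP => [b hb vb|]; last by rewrite eqxx.
  case: tpermP => [E1|E1|_ _]; last by rewrite eqxx.
  - by move/(congr1 val): E1; rewrite va /= => ->; rewrite eqxx; lia.
  - by move/(congr1 val): E1; rewrite vb /= => ->; rewrite eqxx; lia.
have S1 : forall k, \sum_(j < n) (j == k :> nat) <= 1.
  move=> k; case: (ltnP k n) => hk.
    rewrite (bigD1 (Ordinal hk)) //= eqxx big1 // => j nj; apply/eqP; rewrite eqb0.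
    by apply: contra nj => /eqP E2; apply/eqP/val_inj.
  by rewrite big1 // => j _; apply/eqP; rewrite eqb0; apply/eqP => E2; move: (ltn_ord j); lia.
have : n <= N t t + (\sum_(j < n) (j == t.+1 :> nat) + \sum_(j < n) (j == t :> nat)).
  rewrite /N -big_split -big_split /=.
  by rewrite -[X in X <= _]card_ord -sum1_card; apply: leq_sum => j _; apply: E.
have := S1 t.+1; have := S1 t; lia.
Qed.

Definition Fp t := \sum_p (pos p == t).

Lemma Fp_const t : Fp t = Fp z.
Proof.
rewrite /Fp (reindex_inj (mulgI (tperm t z))) /=; apply: eq_bigr => p _.
congr (nat_of_bool _).
rewrite /pos invMg permM tpermV.
apply/eqP/eqP => [E|->]; last by rewrite tpermR.
by rewrite -(tpermK t z ((p^-1)%g z)) E tpermL.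
Qed.

Lemma Fp_val : Fp z = (n.-1)`!.
Proof.
have S : n`! = n * Fp z.
  rewrite -card_Sn -sum1_card.
  transitivity (\sum_(t : 'I_n) Fp t).
    rewrite /Fp exchange_big /=; apply: eq_bigr => p _.
    by rewrite (bigD1 (pos p)) //= eqxx big1 // => s ns; apply/eqP; rewrite eqb0 eq_sym.
  rewrite (eq_bigr (fun _ => Fp z)); last by move=> t _; rewrite Fp_const.
  by rewrite big_const_ord iter_addn_0 mulnC.
move: S; case: n n_gt0 => // m _; rewrite factS /= => /eqP; rewrite eqn_mul2l /=.
by move/eqP.
Qed.

Lemma no_code_prime : prime n -> ~ exists C : {set {perm 'I_n}}, perfect_code1 C.
Proof.
move=> pn [C hC].
pose x s := \sum_(c in C) (pos c == s).
have EQ : forall t, (n.-1)`! = \sum_s x s * N s t.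
  move=> t; rewrite -Fp_val -(Fp_const t) /Fp.
  rewrite (ball_sum n_gt0 hC (fun p => pos p == t)) /=.
  rewrite [LHS](eq_bigr (fun c => N (pos c) t)); last first.
    by move=> c _; apply: eq_bigr => j _; rewrite pos_ball.
  rewrite /x (eq_bigr (fun s => \sum_(c in C) (pos c == s) * N s t)); last first.
    by move=> s _; rewrite big_distrl.
  rewrite [RHS]exchange_big /=; apply: eq_bigr => c _.
  rewrite [RHS](bigD1 (pos c)) //= eqxx mul1n big1 ?addn0 // => s ns.
  by rewrite eq_sym (negbTE ns).
have split : forall t, \sum_s x s * N s t = x t * N t t + \sum_(s | s != t) x s * N s t.
  by move=> t; rewrite (bigD1 t).
have sumN' : forall t, \sum_(s | s != t) N s t = n - N t t.
  move=> t; have := sumN t; rewrite (bigD1 t) //=; lia.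
have [t1 _ Hmax] := @arg_maxnP _ z xpredT x isT.
have [t0 _ Hmin] := @arg_minnP _ z xpredT x isT.
set M := x t1 in Hmax *; set m := x t0 in Hmin *.
have up : forall t, \sum_(s | s != t) x s * N s t <= M * (n - N t t).
  move=> t; rewrite -sumN' big_distrr /=; apply: leq_sum => s _.
  by apply: leq_mul => //; apply: Hmax.
have lo : forall t, m * (n - N t t) <= \sum_(s | s != t) x s * N s t.
  move=> t; rewrite -sumN' big_distrr /=; apply: leq_sum => s _.
  by apply: leq_mul => //; apply: Hmin.
have mM : m <= M by apply: Hmin.
have E1 := EQ t1; rewrite split in E1.
have E0 := EQ t0; rewrite split in E0.
have u0 := up t0; have l1 := lo t1.
have N0 := Ntt t0; have N1 := Ntt t1.
have N0n : N t0 t0 <= n by rewrite -(sumN t0) (bigD1 t0) //= leq_addr.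
have N1n : N t1 t1 <= n by rewrite -(sumN t1) (bigD1 t1) //= leq_addr.
have eqmM : M = m.
  rewrite -/M -/m in E1 E0.
  nia.
have allx : forall s, x s = M.
  move=> s; apply/eqP; rewrite eqn_leq; apply/andP; split; first exact: Hmax.
  by rewrite eqmM; apply: Hmin.
have : (n.-1)`! = M * n.
  rewrite (EQ z) (eq_bigr (fun s => M * N s z)); last by move=> s _; rewrite allx.
  by rewrite -big_distrr sumN.
move=> F.
have : n %| (n.-1)`! by rewrite F dvdn_mull.
rewrite -(expn1 n) pfactor_dvdn ?fact_gt0 // logn_fact // big1_seq //.
move=> k /andP [_]; rewrite mem_index_iota => /andP [k1 _].
apply: divn_small; apply: leq_trans (leq_pexp2l _ k1) ; first by rewrite expn1; case: n n_gt0.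
exact: prime_gt0.
Qed.
End Prime.

Definition b4 : seq nat := [:: 0; 0; 0; 1].
Definition data4 : list (positive * nat) := [:: (2%positive, 3); (17%positive, 7); (257%positive, 15); (4097%positive, 11)].
Definition q4 := 2. Definition d4 := 4.
Definition b6 : seq nat := [:: 0; 0; 1; 1; 2; 2].
Definition data6 : list (positive * nat) := [:: (4387%positive, 10); (4627%positive, 69); (4642%positive, 14); (8467%positive, 8); (8482%positive, 30); (8722%positive, 64); (65827%positive, 53); (66067%positive, 73); (66082%positive, 21); (70147%positive, 2); (70177%positive, 19); (73747%positive, 25); (73762%positive, 23); (73987%positive, 21); (74017%positive, 37); (74242%positive, 19); (74257%positive, 70); (131347%positive, 39); (131362%positive, 16); (131602%positive, 38); (135187%positive, 80); (135202%positive, 46); (135427%positive, 25); (135457%positive, 1); (135682%positive, 51); (135697%positive, 46); (139282%positive, 15); (139522%positive, 2); (139537%positive, 10); (1048867%positive, 54); (1049107%positive, 2); (1049122%positive, 10); (1052707%positive, 26); (1053187%positive, 37); (1053217%positive, 66); (1056787%positive, 21); (1056802%positive, 28); (1057027%positive, 52); (1057057%positive, 14); (1057282%positive, 61); (1057297%positive, 1); (1114147%positive, 19); (1114627%positive, 60); (1114657%positive, 41); (1122307%positive, 26); (1122337%positive, 75); (1122817%positive, 46); (1179667%positive, 34); (1179682%positive, 19); (1179907%positive, 17); (1179937%positive, 73); (1180162%positive, 73); (1180177%positive, 15); (1183747%positive, 30); (1183777%positive, 61); (1184257%positive, 65); (1187842%positive, 55); (1187857%positive, 2); (1188097%positive,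 6); (2097427%positive, 61); (2097442%positive, 74); (2097682%positive, 72); (2101267%positive, 28); (2101282%positive, 27); (2101507%positive, 10); (2101537%positive, 52); (2101762%positive, 79); (2101777%positive, 65); (2105362%positive, 77); (2105602%positive, 1); (2105617%positive, 3); (2162707%positive, 37); (2162722%positive, 70); (2162947%positive, 37); (2162977%positive, 63); (2163202%positive, 20); (2163217%positive, 79); (2166787%positive, 79); (2166817%positive, 20); (2170882%positive, 3); (2170897%positive, 1); (2171137%positive, 77); (2228242%positive, 1); (2228497%positive, 80); (2232322%positive, 80); (2232577%positive, 1)].
Definition q6 := 3. Definition d6 := 4.
Definition b8 : seq nat := [:: 0; 0; 0; 1; 1; 1; 2; 3].
Definition data8 : list (positive * nat) := [:: (69924%positive, 128); (69939%positive, 126); (70164%positive, 130); (70194%positive, 223); (70419%positive, 68); (70434%positive, 71); (74004%positive, 64); (74034%positive, 230); (74514%positive, 91); (78099%positive, 12); (78114%positive, 54); (78354%positive, 41); (135444%positive, 46); (135474%positive, 219); (135954%positive, 204); (143634%positive, 123); (200979%positive, 90); (200994%positive, 157); (201234%positive, 20); (205074%positive, 251); (1052964%positive, 128); (1052979%positive, 198); (1053204%positive, 89); (1053234%positive, 213); (1053459%positive, 31); (1053474%positive, 139); (1057044%positive, 106); (1057074%positive, 249); (1057554%positive, 185); (1061139%positive, 252); (1061154%positive, 69); (1061394%positive, 183); (1114404%positive, 193); (1114419%positive, 167); (1114644%positive, 55); (1114674%positive, 94); (1114899%positive, 195); (1114914%positive, 54); (1118244%positive, 31); (1118259%positive, 253);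 (1118724%positive, 92); (1118769%positive, 252); (1118979%positive, 68); (1119009%positive, 226); (1122324%positive, 82); (1122354%positive, 213); (1122564%positive, 70); (1122609%positive, 6); (1123074%positive, 189); (1123089%positive, 11); (1126419%positive, 238); (1126434%positive, 13); (1126659%positive, 32); (1126689%positive, 230); (1126914%positive, 247); (1126929%positive, 69); (1179924%positive, 248); (1179954%positive, 125); (1180434%positive, 228); (1183764%positive, 77); (1183794%positive, 225); (1184004%positive, 152); (1184049%positive, 238); (1184514%positive, 101); (1184529%positive, 102); (1191954%positive, 43); (1192194%positive, 131); (1192209%positive, 14); (1245459%positive, 4); (1245474%positive, 9); (1245714%positive, 212); (1249299%positive, 131); (1249314%positive, 1); (1249539%positive, 218); (1249569%positive, 16); (1249794%positive, 27); (1249809%positive, 140); (1253394%positive, 59); (1253634%positive, 19); (1253649%positive, 242); (2101524%positive, 255); (2101554%positive, 180); (2102034%positive, 31); (2109714%positive, 210); (2162964%positive, 238); (2162994%positive, 120); (2163474%positive, 191); (2166804%positive, 72); (2166834%positive, 7); (2167044%positive, 140); (2167089%positive, 210); (2167554%positive, 42); (2167569%positive, 17); (2174994%positive, 90); (2175234%positive, 202); (2175249%positive, 199); (2294034%positive, 191); (2297874%positive, 161); (2298114%positive, 200); (2298129%positive, 200); (3150099%positive, 149); (3150114%positive, 232); (3150354%positive, 239); (3154194%positive, 138); (3211539%positive, 20); (3211554%positive, 52); (3211794%positive, 239); (3215379%positive, 6); (3215394%positive, 89); (3215619%positive, 82); (3215649%positive, 112); (3215874%positive, 2); (3215889%positive,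 53); (3219474%positive, 186); (3219714%positive, 40); (3219729%positive, 93); (3277074%positive, 33); (3280914%positive, 147); (3281154%positive, 198); (3281169%positive, 238); (16781604%positive, 32); (16781619%positive, 234); (16781844%positive, 214); (16781874%positive, 60); (16782099%positive, 110); (16782114%positive, 52); (16785684%positive, 56); (16785714%positive, 179); (16786194%positive, 230); (16789779%positive, 152); (16789794%positive, 249); (16790034%positive, 224); (16843044%positive, 64); (16843059%positive, 196); (16843284%positive, 145); (16843314%positive, 207); (16843539%positive, 205); (16843554%positive, 165); (16846884%positive, 106); (16846899%positive, 2); (16847364%positive, 47); (16847409%positive, 204); (16847619%positive, 241); (16847649%positive, 82); (16850964%positive, 107); (16850994%positive, 51); (16851204%positive, 226); (16851249%positive, 179); (16851714%positive, 141); (16851729%positive, 113); (16855059%positive, 195); (16855074%positive, 189); (16855299%positive, 174); (16855329%positive, 247); (16855554%positive, 241); (16855569%positive, 189); (16908564%positive, 246); (16908594%positive, 216); (16909074%positive, 52); (16912404%positive, 91); (16912434%positive, 51); (16912644%positive, 43); (16912689%positive, 96); (16913154%positive, 133); (16913169%positive, 183); (16920594%positive, 131); (16920834%positive, 127); (16920849%positive, 52); (16974099%positive, 88); (16974114%positive, 156); (16974354%positive, 154); (16977939%positive, 39); (16977954%positive, 241); (16978179%positive, 109); (16978209%positive, 20); (16978434%positive, 49); (16978449%positive, 81); (16982034%positive, 131); (16982274%positive, 231); (16982289%positive, 32); (17826084%positive, 192); (17826099%positive, 208); (17826324%positive, 246); (17826354%positive, 233); (17826579%positive, 54); (17826594%positive,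 69); (17829924%positive, 26); (17829939%positive, 30); (17830404%positive, 74); (17830449%positive, 55); (17830659%positive, 228); (17830689%positive, 233); (17834004%positive, 11); (17834034%positive, 127); (17834244%positive, 15); (17834289%positive, 9); (17834754%positive, 161); (17834769%positive, 195); (17838099%positive, 141); (17838114%positive, 167); (17838339%positive, 107); (17838369%positive, 139); (17838594%positive, 85); (17838609%positive, 199); (17891364%positive, 48); (17891379%positive, 126); (17891844%positive, 140); (17891889%positive, 217); (17892099%positive, 240); (17892129%positive, 219); (17899524%positive, 89); (17899569%positive, 221); (17900289%positive, 110); (17903619%positive, 235); (17903649%positive, 131); (17904129%positive, 136); (17956884%positive, 119); (17956914%positive, 215); (17957124%positive, 199); (17957169%positive, 125); (17957634%positive, 1); (17957649%positive, 27); (17960964%positive, 109); (17961009%positive, 236); (17961729%positive, 29); (17969154%positive, 39); (17969169%positive, 224); (17969409%positive, 18); (18022419%positive, 91); (18022434%positive, 95); (18022659%positive, 165); (18022689%positive, 197); (18022914%positive, 149); (18022929%positive, 149); (18026499%positive, 131); (18026529%positive, 186); (18027009%positive, 167); (18030594%positive, 223); (18030609%positive, 148); (18030849%positive, 78); (18874644%positive, 234); (18874674%positive, 255); (18875154%positive, 48); (18878484%positive, 184); (18878514%positive, 12); (18878724%positive, 174); (18878769%positive, 2); (18879234%positive, 83); (18879249%positive, 168); (18886674%positive, 161); (18886914%positive, 249); (18886929%positive, 149); (18939924%positive, 129); (18939954%positive, 90); (18940164%positive, 75); (18940209%positive, 222); (18940674%positive, 167); (18940689%positive, 180); (18944004%positive,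 163); (18944049%positive, 230); (18944769%positive, 245); (18952194%positive, 173); (18952209%positive, 177); (18952449%positive, 172); (19070994%positive, 101); (19071234%positive, 29); (19071249%positive, 135); (19075074%positive, 45); (19075089%positive, 189); (19075329%positive, 5); (19923219%positive, 128); (19923234%positive, 109); (19923474%positive, 232); (19927059%positive, 122); (19927074%positive, 84); (19927299%positive, 104); (19927329%positive, 196); (19927554%positive, 47); (19927569%positive, 180); (19931154%positive, 15); (19931394%positive, 85); (19931409%positive, 187); (19988499%positive, 47); (19988514%positive, 58); (19988739%positive, 149); (19988769%positive, 144); (19988994%positive, 115); (19989009%positive, 136); (19992579%positive, 213); (19992609%positive, 196); (19993089%positive, 145); (19996674%positive, 17); (19996689%positive, 247); (19996929%positive, 134); (20054034%positive, 51); (20054274%positive, 157); (20054289%positive, 195); (20058114%positive, 109); (20058129%positive, 177); (20058369%positive, 43); (33558804%positive, 52); (33558834%positive, 115); (33559314%positive, 146); (33566994%positive, 95); (33620244%positive, 127); (33620274%positive, 43); (33620754%positive, 238); (33624084%positive, 90); (33624114%positive, 32); (33624324%positive, 30); (33624369%positive, 45); (33624834%positive, 59); (33624849%positive, 164); (33632274%positive, 157); (33632514%positive, 214); (33632529%positive, 250); (33751314%positive, 112); (33755154%positive, 169); (33755394%positive, 175); (33755409%positive, 99); (34603284%positive, 204); (34603314%positive, 130); (34603794%positive, 251); (34607124%positive, 159); (34607154%positive, 67); (34607364%positive, 225); (34607409%positive, 48); (34607874%positive, 118); (34607889%positive, 80); (34615314%positive, 233); (34615554%positive, 231); (34615569%positive,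 197); (34668564%positive, 168); (34668594%positive, 15); (34668804%positive, 230); (34668849%positive, 232); (34669314%positive, 80); (34669329%positive, 36); (34672644%positive, 223); (34672689%positive, 41); (34673409%positive, 208); (34680834%positive, 111); (34680849%positive, 148); (34681089%positive, 144); (34799634%positive, 1); (34799874%positive, 243); (34799889%positive, 203); (34803714%positive, 231); (34803729%positive, 151); (34803969%positive, 134); (36700434%positive, 35); (36704274%positive, 69); (36704514%positive, 250); (36704529%positive, 27); (36765714%positive, 220); (36765954%positive, 27); (36765969%positive, 201); (36769794%positive, 221); (36769809%positive, 114); (36770049%positive, 130); (50336019%positive, 86); (50336034%positive, 243); (50336274%positive, 190); (50340114%positive, 205); (50397459%positive, 241); (50397474%positive, 75); (50397714%positive, 130); (50401299%positive, 172); (50401314%positive, 184); (50401539%positive, 104); (50401569%positive, 169); (50401794%positive, 41); (50401809%positive, 6); (50405394%positive, 237); (50405634%positive, 190); (50405649%positive, 172); (50462994%positive, 160); (50466834%positive, 5); (50467074%positive, 61); (50467089%positive, 93); (51380499%positive, 222); (51380514%positive, 154); (51380754%positive, 237); (51384339%positive, 185); (51384354%positive, 147); (51384579%positive, 175); (51384609%positive, 200); (51384834%positive, 22); (51384849%positive, 158); (51388434%positive, 221); (51388674%positive, 113); (51388689%positive, 253); (51445779%positive, 10); (51445794%positive, 247); (51446019%positive, 184); (51446049%positive, 240); (51446274%positive, 56); (51446289%positive, 98); (51449859%positive, 149); (51449889%positive, 109); (51450369%positive, 114); (51453954%positive, 27); (51453969%positive, 64); (51454209%positive, 238); (51511314%positive,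 169); (51511554%positive, 245); (51511569%positive, 105); (51515394%positive, 95); (51515409%positive, 19); (51515649%positive, 134); (52429074%positive, 3); (52432914%positive, 123); (52433154%positive, 218); (52433169%positive, 185); (52494354%positive, 124); (52494594%positive, 145); (52494609%positive, 55); (52498434%positive, 193); (52498449%positive, 44); (52498689%positive, 220); (268439844%positive, 32); (268439859%positive, 42); (268440084%positive, 214); (268440114%positive, 39); (268440339%positive, 130); (268440354%positive, 197); (268443924%positive, 111); (268443954%positive, 111); (268444434%positive, 206); (268448019%positive, 125); (268448034%positive, 129); (268448274%positive, 48); (268501284%positive, 96); (268501299%positive, 204); (268501524%positive, 242); (268501554%positive, 69); (268501779%positive, 160); (268501794%positive, 83); (268505124%positive, 130); (268505139%positive, 194); (268505604%positive, 228); (268505649%positive, 1); (268505859%positive, 244); (268505889%positive, 221); (268509204%positive, 55); (268509234%positive, 127); (268509444%positive, 81); (268509489%positive, 191); (268509954%positive, 251); (268509969%positive, 13); (268513299%positive, 99); (268513314%positive, 69); (268513539%positive, 175); (268513569%positive, 199); (268513794%positive, 139); (268513809%positive, 141); (268566804%positive, 199); (268566834%positive, 156); (268567314%positive, 67); (268570644%positive, 225); (268570674%positive, 245); (268570884%positive, 199); (268570929%positive, 187); (268571394%positive, 205); (268571409%positive, 177); (268578834%positive, 248); (268579074%positive, 226); (268579089%positive, 159); (268632339%positive, 113); (268632354%positive, 18); (268632594%positive, 17); (268636179%positive, 99); (268636194%positive, 9); (268636419%positive, 251); (268636449%positive, 79); (268636674%positive, 107); (268636689%positive, 77); (268640274%positive,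 172); (268640514%positive, 94); (268640529%positive, 167); (269484324%positive, 160); (269484339%positive, 184); (269484564%positive, 217); (269484594%positive, 188); (269484819%positive, 239); (269484834%positive, 198); (269488164%positive, 10); (269488179%positive, 118); (269488644%positive, 81); (269488689%positive, 177); (269488899%positive, 229); (269488929%positive, 91); (269492244%positive, 132); (269492274%positive, 99); (269492484%positive, 219); (269492529%positive, 181); (269492994%positive, 153); (269493009%positive, 125); (269496339%positive, 128); (269496354%positive, 111); (269496579%positive, 219); (269496609%positive, 19); (269496834%positive, 193); (269496849%positive, 125); (269549604%positive, 28); (269549619%positive, 202); (269550084%positive, 176); (269550129%positive, 250); (269550339%positive, 8); (269550369%positive, 58); (269557764%positive, 198); (269557809%positive, 221); (269558529%positive, 198); (269561859%positive, 94); (269561889%positive, 111); (269562369%positive, 72); (269615124%positive, 113); (269615154%positive, 42); (269615364%positive, 183); (269615409%positive, 81); (269615874%positive, 157); (269615889%positive, 245); (269619204%positive, 10); (269619249%positive, 94); (269619969%positive, 72); (269627394%positive, 30); (269627409%positive, 167); (269627649%positive, 211); (269680659%positive, 47); (269680674%positive, 18); (269680899%positive, 19); (269680929%positive, 103); (269681154%positive, 59); (269681169%positive, 153); (269684739%positive, 88); (269684769%positive, 86); (269685249%positive, 234); (269688834%positive, 2); (269688849%positive, 63); (269689089%positive, 67); (270532884%positive, 201); (270532914%positive, 130); (270533394%positive, 161); (270536724%positive, 41); (270536754%positive, 26); (270536964%positive, 147); (270537009%positive, 56); (270537474%positive, 94); (270537489%positive, 179); (270544914%positive, 196); (270545154%positive,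 251); (270545169%positive, 181); (270598164%positive, 130); (270598194%positive, 50); (270598404%positive, 88); (270598449%positive, 214); (270598914%positive, 250); (270598929%positive, 47); (270602244%positive, 154); (270602289%positive, 169); (270603009%positive, 162); (270610434%positive, 139); (270610449%positive, 17); (270610689%positive, 91); (270729234%positive, 223); (270729474%positive, 65); (270729489%positive, 245); (270733314%positive, 203); (270733329%positive, 145); (270733569%positive, 215); (271581459%positive, 99); (271581474%positive, 52); (271581714%positive, 69); (271585299%positive, 59); (271585314%positive, 216); (271585539%positive, 65); (271585569%positive, 240); (271585794%positive, 186); (271585809%positive, 39); (271589394%positive, 18); (271589634%positive, 189); (271589649%positive, 161); (271646739%positive, 244); (271646754%positive, 64); (271646979%positive, 18); (271647009%positive, 22); (271647234%positive, 190); (271647249%positive, 211); (271650819%positive, 16); (271650849%positive, 91); (271651329%positive, 234); (271654914%positive, 13); (271654929%positive, 101); (271655169%positive, 5); (271712274%positive, 173); (271712514%positive, 153); (271712529%positive, 129); (271716354%positive, 59); (271716369%positive, 45); (271716609%positive, 189); (285212964%positive, 5); (285212979%positive, 239); (285213204%positive, 134); (285213234%positive, 88); (285213459%positive, 78); (285213474%positive, 194); (285216804%positive, 215); (285216819%positive, 57); (285217284%positive, 59); (285217329%positive, 188); (285217539%positive, 143); (285217569%positive, 252); (285220884%positive, 178); (285220914%positive, 156); (285221124%positive, 132); (285221169%positive, 41); (285221634%positive, 141); (285221649%positive, 243); (285224979%positive, 40); (285224994%positive, 140); (285225219%positive, 128); (285225249%positive, 129); (285225474%positive, 159); (285225489%positive,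 69); (285278244%positive, 248); (285278259%positive, 138); (285278724%positive, 231); (285278769%positive, 187); (285278979%positive, 185); (285279009%positive, 229); (285286404%positive, 190); (285286449%positive, 133); (285287169%positive, 211); (285290499%positive, 44); (285290529%positive, 105); (285291009%positive, 129); (285343764%positive, 192); (285343794%positive, 50); (285344004%positive, 131); (285344049%positive, 157); (285344514%positive, 146); (285344529%positive, 175); (285347844%positive, 10); (285347889%positive, 141); (285348609%positive, 186); (285356034%positive, 204); (285356049%positive, 67); (285356289%positive, 187); (285409299%positive, 174); (285409314%positive, 100); (285409539%positive, 109); (285409569%positive, 169); (285409794%positive, 4); (285409809%positive, 161); (285413379%positive, 246); (285413409%positive, 125); (285413889%positive, 186); (285417474%positive, 120); (285417489%positive, 67); (285417729%positive, 43); (286261284%positive, 180); (286261299%positive, 174); (286261764%positive, 214); (286261809%positive, 131); (286262019%positive, 92); (286262049%positive, 35); (286269444%positive, 138); (286269489%positive, 64); (286270209%positive, 1); (286273539%positive, 6); (286273569%positive, 176); (286274049%positive, 63); (286392324%positive, 4); (286392369%positive, 173); (286393089%positive, 170); (286404609%positive, 59); (286457859%positive, 176); (286457889%positive, 31); (286458369%positive, 210); (286466049%positive, 123); (287309844%positive, 232); (287309874%positive, 82); (287310084%positive, 88); (287310129%positive, 141); (287310594%positive, 5); (287310609%positive, 72); (287313924%positive, 10); (287313969%positive, 162); (287314689%positive, 111); (287322114%positive, 49); (287322129%positive, 90); (287322369%positive, 212); (287375364%positive, 181); (287375409%positive, 94); (287376129%positive, 111); (287387649%positive, 180); (287506434%positive,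 16); (287506689%positive, 119); (287510529%positive, 9); (288358419%positive, 206); (288358434%positive, 132); (288358659%positive, 70); (288358689%positive, 59); (288358914%positive, 161); (288358929%positive, 240); (288362499%positive, 176); (288362529%positive, 238); (288363009%positive, 191); (288366594%positive, 131); (288366609%positive, 180); (288366849%positive, 132); (288423939%positive, 107); (288423969%positive, 82); (288424449%positive, 223); (288432129%positive, 140); (288489474%positive, 46); (288489489%positive, 70); (288489729%positive, 89); (288493569%positive, 155); (301990164%positive, 73); (301990194%positive, 221); (301990674%positive, 100); (301994004%positive, 70); (301994034%positive, 170); (301994244%positive, 172); (301994289%positive, 183); (301994754%positive, 192); (301994769%positive, 122); (302002194%positive, 100); (302002434%positive, 18); (302002449%positive, 191); (302055444%positive, 87); (302055474%positive, 130); (302055684%positive, 33); (302055729%positive, 147); (302056194%positive, 120); (302056209%positive, 148); (302059524%positive, 132); (302059569%positive, 88); (302060289%positive, 217); (302067714%positive, 73); (302067729%positive, 241); (302067969%positive, 65); (302186514%positive, 76); (302186754%positive, 111); (302186769%positive, 135); (302190594%positive, 165); (302190609%positive, 221); (302190849%positive, 205); (303038484%positive, 246); (303038514%positive, 153); (303038724%positive, 246); (303038769%positive, 122); (303039234%positive, 148); (303039249%positive, 141); (303042564%positive, 41); (303042609%positive, 203); (303043329%positive, 20); (303050754%positive, 50); (303050769%positive, 188); (303051009%positive, 137); (303104004%positive, 192); (303104049%positive, 115); (303104769%positive, 136); (303116289%positive, 125); (303235074%positive, 97); (303235089%positive, 217); (303235329%positive, 101); (303239169%positive, 22); (305135634%positive,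 226); (305135874%positive, 230); (305135889%positive, 165); (305139714%positive, 179); (305139729%positive, 5); (305139969%positive, 182); (305201154%positive, 197); (305201169%positive, 212); (305201409%positive, 75); (305205249%positive, 231); (318767379%positive, 119); (318767394%positive, 153); (318767634%positive, 242); (318771219%positive, 120); (318771234%positive, 98); (318771459%positive, 222); (318771489%positive, 143); (318771714%positive, 50); (318771729%positive, 186); (318775314%positive, 114); (318775554%positive, 138); (318775569%positive, 247); (318832659%positive, 45); (318832674%positive, 170); (318832899%positive, 235); (318832929%positive, 195); (318833154%positive, 186); (318833169%positive, 172); (318836739%positive, 54); (318836769%positive, 32); (318837249%positive, 103); (318840834%positive, 117); (318840849%positive, 83); (318841089%positive, 33); (318898194%positive, 60); (318898434%positive, 99); (318898449%positive, 223); (318902274%positive, 127); (318902289%positive, 179); (318902529%positive, 149); (319815699%positive, 80); (319815714%positive, 29); (319815939%positive, 8); (319815969%positive, 130); (319816194%positive, 34); (319816209%positive, 255); (319819779%positive, 91); (319819809%positive, 171); (319820289%positive, 184); (319823874%positive, 124); (319823889%positive, 24); (319824129%positive, 125); (319881219%positive, 162); (319881249%positive, 179); (319881729%positive, 244); (319889409%positive, 219); (319946754%positive, 111); (319946769%positive, 243); (319947009%positive, 25); (319950849%positive, 166); (320864274%positive, 56); (320864514%positive, 28); (320864529%positive, 9); (320868354%positive, 133); (320868369%positive, 79); (320868609%positive, 190); (320929794%positive, 135); (320929809%positive, 252); (320930049%positive, 117); (320933889%positive, 127); (536875284%positive, 63); (536875314%positive, 2); (536875794%positive, 107); (536883474%positive,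 176); (536936724%positive, 143); (536936754%positive, 219); (536937234%positive, 16); (536940564%positive, 168); (536940594%positive, 182); (536940804%positive, 178); (536940849%positive, 181); (536941314%positive, 80); (536941329%positive, 245); (536948754%positive, 22); (536948994%positive, 248); (536949009%positive, 163); (537067794%positive, 198); (537071634%positive, 12); (537071874%positive, 254); (537071889%positive, 75); (537919764%positive, 18); (537919794%positive, 200); (537920274%positive, 134); (537923604%positive, 183); (537923634%positive, 235); (537923844%positive, 189); (537923889%positive, 88); (537924354%positive, 50); (537924369%positive, 213); (537931794%positive, 13); (537932034%positive, 51); (537932049%positive, 229); (537985044%positive, 243); (537985074%positive, 62); (537985284%positive, 153); (537985329%positive, 239); (537985794%positive, 161); (537985809%positive, 232); (537989124%positive, 210); (537989169%positive, 8); (537989889%positive, 18); (537997314%positive, 59); (537997329%positive, 109); (537997569%positive, 186); (538116114%positive, 224); (538116354%positive, 59); (538116369%positive, 203); (538120194%positive, 47); (538120209%positive, 110); (538120449%positive, 192); (540016914%positive, 188); (540020754%positive, 89); (540020994%positive, 8); (540021009%positive, 208); (540082194%positive, 143); (540082434%positive, 229); (540082449%positive, 196); (540086274%positive, 52); (540086289%positive, 49); (540086529%positive, 36); (553648404%positive, 240); (553648434%positive, 144); (553648914%positive, 142); (553652244%positive, 85); (553652274%positive, 45); (553652484%positive, 75); (553652529%positive, 234); (553652994%positive, 116); (553653009%positive, 143); (553660434%positive, 78); (553660674%positive, 143); (553660689%positive, 251); (553713684%positive, 241); (553713714%positive, 184); (553713924%positive, 119); (553713969%positive, 89); (553714434%positive,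 219); (553714449%positive, 58); (553717764%positive, 56); (553717809%positive, 236); (553718529%positive, 38); (553725954%positive, 163); (553725969%positive, 71); (553726209%positive, 3); (553844754%positive, 136); (553844994%positive, 224); (553845009%positive, 77); (553848834%positive, 163); (553848849%positive, 163); (553849089%positive, 238); (554696724%positive, 80); (554696754%positive, 215); (554696964%positive, 2); (554697009%positive, 158); (554697474%positive, 3); (554697489%positive, 64); (554700804%positive, 159); (554700849%positive, 17); (554701569%positive, 180); (554708994%positive, 113); (554709009%positive, 216); (554709249%positive, 164); (554762244%positive, 175); (554762289%positive, 54); (554763009%positive, 245); (554774529%positive, 186); (554893314%positive, 253); (554893329%positive, 248); (554893569%positive, 252); (554897409%positive, 236); (556793874%positive, 14); (556794114%positive, 111); (556794129%positive, 150); (556797954%positive, 192); (556797969%positive, 237); (556798209%positive, 3); (556859394%positive, 66); (556859409%positive, 110); (556859649%positive, 31); (556863489%positive, 132); (587202834%positive, 206); (587206674%positive, 170); (587206914%positive, 234); (587206929%positive, 94); (587268114%positive, 89); (587268354%positive, 54); (587268369%positive, 254); (587272194%positive, 66); (587272209%positive, 162); (587272449%positive, 253); (588251154%positive, 239); (588251394%positive, 248); (588251409%positive, 240); (588255234%positive, 140); (588255249%positive, 164); (588255489%positive, 71); (588316674%positive, 74); (588316689%positive, 10); (588316929%positive, 134); (588320769%positive, 254); (805310739%positive, 47); (805310754%positive, 224); (805310994%positive, 149); (805314834%positive, 228); (805372179%positive, 223); (805372194%positive, 201); (805372434%positive, 42); (805376019%positive, 216); (805376034%positive, 132); (805376259%positive,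 114); (805376289%positive, 95); (805376514%positive, 26); (805376529%positive, 163); (805380114%positive, 74); (805380354%positive, 170); (805380369%positive, 45); (805437714%positive, 42); (805441554%positive, 30); (805441794%positive, 198); (805441809%positive, 89); (806355219%positive, 162); (806355234%positive, 182); (806355474%positive, 88); (806359059%positive, 247); (806359074%positive, 1); (806359299%positive, 153); (806359329%positive, 198); (806359554%positive, 184); (806359569%positive, 107); (806363154%positive, 67); (806363394%positive, 151); (806363409%positive, 39); (806420499%positive, 75); (806420514%positive, 12); (806420739%positive, 189); (806420769%positive, 65); (806420994%positive, 147); (806421009%positive, 174); (806424579%positive, 178); (806424609%positive, 254); (806425089%positive, 76); (806428674%positive, 199); (806428689%positive, 11); (806428929%positive, 120); (806486034%positive, 132); (806486274%positive, 251); (806486289%positive, 47); (806490114%positive, 241); (806490129%positive, 130); (806490369%positive, 102); (807403794%positive, 182); (807407634%positive, 103); (807407874%positive, 80); (807407889%positive, 76); (807469074%positive, 251); (807469314%positive, 17); (807469329%positive, 234); (807473154%positive, 196); (807473169%positive, 79); (807473409%positive, 92); (822083859%positive, 176); (822083874%positive, 54); (822084114%positive, 232); (822087699%positive, 241); (822087714%positive, 119); (822087939%positive, 51); (822087969%positive, 8); (822088194%positive, 130); (822088209%positive, 1); (822091794%positive, 224); (822092034%positive, 49); (822092049%positive, 87); (822149139%positive, 85); (822149154%positive, 6); (822149379%positive, 247); (822149409%positive, 95); (822149634%positive, 105); (822149649%positive, 248); (822153219%positive, 232); (822153249%positive, 90); (822153729%positive, 232); (822157314%positive, 1); (822157329%positive,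 59); (822157569%positive, 237); (822214674%positive, 146); (822214914%positive, 196); (822214929%positive, 171); (822218754%positive, 183); (822218769%positive, 139); (822219009%positive, 242); (823132179%positive, 240); (823132194%positive, 9); (823132419%positive, 146); (823132449%positive, 76); (823132674%positive, 201); (823132689%positive, 170); (823136259%positive, 15); (823136289%positive, 255); (823136769%positive, 78); (823140354%positive, 103); (823140369%positive, 246); (823140609%positive, 120); (823197699%positive, 255); (823197729%positive, 84); (823198209%positive, 255); (823205889%positive, 110); (823263234%positive, 143); (823263249%positive, 56); (823263489%positive, 234); (824180754%positive, 230); (824180994%positive, 185); (824181009%positive, 246); (824184834%positive, 210); (824184849%positive, 177); (824185089%positive, 183); (824246274%positive, 182); (824246289%positive, 246); (824246529%positive, 121); (824250369%positive, 2); (838861074%positive, 148); (838864914%positive, 152); (838865154%positive, 252); (838865169%positive, 208); (838926354%positive, 151); (838926594%positive, 106); (838926609%positive, 26); (838930434%positive, 162); (838930449%positive, 170); (838930689%positive, 255); (839909394%positive, 229); (839913729%positive, 1)].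
Definition q8 := 2. Definition d8 := 8.
Definition b9 : seq nat := [:: 0; 0; 0; 0; 0; 1; 1; 2; 2].
Definition data9 : list (positive * nat) := [:: (4387%positive, 136); (4627%positive, 169); (4642%positive, 91); (8467%positive, 214); (8482%positive, 172); (8722%positive, 196); (65827%positive, 94); (66067%positive, 172); (66082%positive, 85); (69667%positive, 175); (70147%positive, 169); (70177%positive, 202); (73747%positive, 55); (73762%positive, 166); (73987%positive, 214); (74017%positive, 13); (74242%positive, 88); (74257%positive, 172); (131347%positive, 76); (131362%positive, 97); (131602%positive, 157); (135187%positive, 40); (135202%positive, 214); (135427%positive, 109); (135457%positive, 133); (135682%positive, 64); (135697%positive, 31); (139282%positive, 139); (139522%positive, 118); (139537%positive, 211); (1048867%positive, 19); (1049107%positive, 124); (1049122%positive, 118); (1052707%positive, 145); (1053187%positive, 22); (1053217%positive, 64); (1056787%positive, 160); (1056802%positive, 109); (1057027%positive, 13); (1057057%positive, 199); (1057282%positive, 130); (1057297%positive, 223); (1114147%positive, 43); (1114627%positive, 70); (1114657%positive, 55); (1122307%positive, 25); (1122337%positive, 82); (1122817%positive, 73); (1179667%positive, 7); (1179682%positive, 55); (1179907%positive, 64); (1179937%positive, 67); (1180162%positive, 235); (1180177%positive, 55); (1183747%positive, 37); (1183777%positive, 193); (1184257%positive, 229); (1187842%positive, 28); (1187857%positive, 217); (1188097%positive, 184); (2097427%positive, 241); (2097442%positive, 208); (2097682%positive, 241); (2101267%positive, 115); (2101282%positive, 235); (2101507%positive, 40); (2101537%positive, 154); (2101762%positive, 22);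 (2101777%positive, 25); (2105362%positive, 106); (2105602%positive, 211); (2105617%positive, 43); (2162707%positive, 193); (2162722%positive, 241); (2162947%positive, 169); (2162977%positive, 91); (2163202%positive, 178); (2163217%positive, 214); (2166787%positive, 7); (2166817%positive, 1); (2167297%positive, 172); (2170882%positive, 106); (2170897%positive, 25); (2171137%positive, 181); (2228242%positive, 223); (2228482%positive, 100); (2228497%positive, 10); (2232322%positive, 73); (2232337%positive, 217); (2232577%positive, 139); (16777507%positive, 28); (16777747%positive, 7); (16777762%positive, 64); (16781347%positive, 133); (16781827%positive, 202); (16781857%positive, 238); (16785427%positive, 184); (16785442%positive, 16); (16785667%positive, 31); (16785697%positive, 238); (16785922%positive, 40); (16785937%positive, 10); (16842787%positive, 13); (16843267%positive, 61); (16843297%positive, 238); (16850947%positive, 172); (16850977%positive, 55); (16851457%positive, 223); (16908307%positive, 229); (16908322%positive, 160); (16908547%positive, 1); (16908577%positive, 169); (16908802%positive, 64); (16908817%positive, 94); (16912387%positive, 49); (16912417%positive, 220); (16912897%positive, 163); (16916482%positive, 31); (16916497%positive, 55); (16916737%positive, 154); (17825827%positive, 238); (17826307%positive, 25); (17826337%positive, 106); (17833987%positive, 1); (17834017%positive, 157); (17834497%positive, 109); (17956867%positive, 112); (17956897%positive, 154); (17957377%positive, 37); (17965057%positive, 31); (18874387%positive, 109); (18874402%positive, 94); (18874627%positive, 187); (18874657%positive, 241); (18874882%positive, 196); (18874897%positive, 31); (18878467%positive, 19); (18878497%positive, 175); (18878977%positive, 118); (18882562%positive, 82); (18882577%positive,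 172); (18882817%positive, 163); (18939907%positive, 37); (18939937%positive, 142); (18940417%positive, 187); (18948097%positive, 154); (19005442%positive, 211); (19005457%positive, 115); (19005697%positive, 127); (19009537%positive, 76); (33554707%positive, 97); (33554722%positive, 55); (33554962%positive, 25); (33558547%positive, 121); (33558562%positive, 196); (33558787%positive, 22); (33558817%positive, 67); (33559042%positive, 193); (33559057%positive, 190); (33562642%positive, 220); (33562882%positive, 193); (33562897%positive, 100); (33619987%positive, 154); (33620002%positive, 76); (33620227%positive, 70); (33620257%positive, 94); (33620482%positive, 106); (33620497%positive, 199); (33624067%positive, 1); (33624097%positive, 19); (33624577%positive, 187); (33628162%positive, 1); (33628177%positive, 205); (33628417%positive, 214); (33685522%positive, 157); (33685762%positive, 55); (33685777%positive, 76); (33689602%positive, 184); (33689617%positive, 100); (33689857%positive, 226); (34603027%positive, 199); (34603042%positive, 40); (34603267%positive, 232); (34603297%positive, 142); (34603522%positive, 214); (34603537%positive, 139); (34607107%positive, 1); (34607137%positive, 166); (34607617%positive, 145); (34611202%positive, 217); (34611217%positive, 190); (34611457%positive, 118); (34668547%positive, 208); (34668577%positive, 241); (34669057%positive, 160); (34676737%positive, 64); (34734082%positive, 238); (34734097%positive, 25); (34734337%positive, 136); (34738177%positive, 202); (35651602%positive, 28); (35651842%positive, 232); (35651857%positive, 103); (35655682%positive, 145); (35655697%positive, 199); (35655937%positive, 109); (35717122%positive, 118); (35717137%positive, 85); (35717377%positive, 34); (35721217%positive, 208); (268435747%positive, 187); (268435987%positive, 58); (268436002%positive, 25); (268439587%positive,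 52); (268440067%positive, 124); (268440097%positive, 7); (268443667%positive, 220); (268443682%positive, 124); (268443907%positive, 241); (268443937%positive, 97); (268444162%positive, 106); (268444177%positive, 94); (268501027%positive, 202); (268501507%positive, 130); (268501537%positive, 229); (268509187%positive, 22); (268509217%positive, 13); (268509697%positive, 166); (268566547%positive, 67); (268566562%positive, 34); (268566787%positive, 241); (268566817%positive, 16); (268567042%positive, 88); (268567057%positive, 157); (268570627%positive, 133); (268570657%positive, 214); (268571137%positive, 25); (268574722%positive, 133); (268574737%positive, 139); (268574977%positive, 34); (269484067%positive, 235); (269484547%positive, 223); (269484577%positive, 22); (269492227%positive, 16); (269492257%positive, 76); (269492737%positive, 10); (269615107%positive, 220); (269615137%positive, 151); (269615617%positive, 100); (269623297%positive, 109); (270532627%positive, 70); (270532642%positive, 91); (270532867%positive, 52); (270532897%positive, 31); (270533122%positive, 142); (270533137%positive, 37); (270536707%positive, 223); (270536737%positive, 202); (270537217%positive, 28); (270540802%positive, 142); (270540817%positive, 235); (270541057%positive, 37); (270598147%positive, 100); (270598177%positive, 238); (270598657%positive, 43); (270606337%positive, 241); (270663682%positive, 211); (270663697%positive, 220); (270663937%positive, 217); (270667777%positive, 109); (285212707%positive, 154); (285213187%positive, 43); (285213217%positive, 49); (285220867%positive, 103); (285220897%positive, 166); (285221377%positive, 103); (285343747%positive, 163); (285343777%positive, 106); (285344257%positive, 238); (285351937%positive, 172); (287309827%positive, 136); (287309857%positive, 232); (287310337%positive, 154); (287318017%positive, 43); (287440897%positive, 211); (301989907%positive, 133); (301989922%positive,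 145); (301990147%positive, 151); (301990177%positive, 175); (301990402%positive, 16); (301990417%positive, 172); (301993987%positive, 49); (301994017%positive, 211); (301994497%positive, 193); (301998082%positive, 76); (301998097%positive, 118); (301998337%positive, 220); (302055427%positive, 52); (302055457%positive, 85); (302055937%positive, 37); (302063617%positive, 52); (302120962%positive, 190); (302120977%positive, 211); (302121217%positive, 94); (302125057%positive, 55); (303038467%positive, 217); (303038497%positive, 169); (303038977%positive, 190); (303046657%positive, 241); (303169537%positive, 193); (304087042%positive, 172); (304087057%positive, 67); (304087297%positive, 199); (304091137%positive, 7); (304152577%positive, 10); (536871187%positive, 70); (536871202%positive, 226); (536871442%positive, 88); (536875027%positive, 25); (536875042%positive, 190); (536875267%positive, 100); (536875297%positive, 1); (536875522%positive, 172); (536875537%positive, 61); (536879122%positive, 97); (536879362%positive, 100); (536879377%positive, 70); (536936467%positive, 94); (536936482%positive, 7); (536936707%positive, 160); (536936737%positive, 196); (536936962%positive, 142); (536936977%positive, 112); (536940547%positive, 142); (536940577%positive, 223); (536941057%positive, 160); (536944642%positive, 151); (536944657%positive, 76); (536944897%positive, 142); (537002002%positive, 61); (537002242%positive, 163); (537002257%positive, 133); (537006082%positive, 46); (537006097%positive, 151); (537006337%positive, 235); (537919507%positive, 127); (537919522%positive, 229); (537919747%positive, 163); (537919777%positive, 160); (537920002%positive, 118); (537920017%positive, 22); (537923587%positive, 100); (537923617%positive, 160); (537924097%positive, 31); (537927682%positive, 82); (537927697%positive, 202); (537927937%positive, 13); (537985027%positive, 139); (537985057%positive, 61); (537985537%positive,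 181); (537993217%positive, 136); (538050562%positive, 178); (538050577%positive, 133); (538050817%positive, 58); (538054657%positive, 166); (538968082%positive, 172); (538968322%positive, 199); (538968337%positive, 193); (538972162%positive, 145); (538972177%positive, 76); (538972417%positive, 211); (539033602%positive, 157); (539033617%positive, 13); (539033857%positive, 55); (539037697%positive, 217); (553648147%positive, 82); (553648162%positive, 166); (553648387%positive, 19); (553648417%positive, 7); (553648642%positive, 226); (553648657%positive, 175); (553652227%positive, 151); (553652257%positive, 241); (553652737%positive, 88); (553656322%positive, 214); (553656337%positive, 220); (553656577%positive, 52); (553713667%positive, 73); (553713697%positive, 7); (553714177%positive, 94); (553721857%positive, 91); (553779202%positive, 31); (553779217%positive, 232); (553779457%positive, 7); (553783297%positive, 148); (554696707%positive, 4); (554696737%positive, 217); (554697217%positive, 13); (554704897%positive, 181); (554827777%positive, 214); (555745282%positive, 58); (555745297%positive, 205); (555745537%positive, 238); (555749377%positive, 172); (555810817%positive, 175); (570425362%positive, 190); (570425602%positive, 64); (570425617%positive, 49); (570429442%positive, 7); (570429457%positive, 238); (570429697%positive, 106); (570490882%positive, 118); (570490897%positive, 202); (570491137%positive, 157); (570494977%positive, 217); (571473922%positive, 94); (571473937%positive, 169); (571474177%positive, 49); (571478017%positive, 64); (571539457%positive, 202); (4294967587%positive, 142); (4294967827%positive, 58); (4294967842%positive, 115); (4294971427%positive, 118); (4294971907%positive, 211); (4294971937%positive, 13); (4294975507%positive, 124); (4294975522%positive, 199); (4294975747%positive, 22); (4294975777%positive, 85); (4294976002%positive, 202); (4294976017%positive,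 226); (4295032867%positive, 220); (4295033347%positive, 94); (4295033377%positive, 118); (4295041027%positive, 199); (4295041057%positive, 184); (4295041537%positive, 37); (4295098387%positive, 220); (4295098402%positive, 97); (4295098627%positive, 223); (4295098657%positive, 31); (4295098882%positive, 160); (4295098897%positive, 190); (4295102467%positive, 67); (4295102497%positive, 178); (4295102977%positive, 49); (4295106562%positive, 40); (4295106577%positive, 184); (4295106817%positive, 238); (4296015907%positive, 187); (4296016387%positive, 55); (4296016417%positive, 223); (4296024067%positive, 52); (4296024097%positive, 118); (4296024577%positive, 145); (4296146947%positive, 13); (4296146977%positive, 19); (4296147457%positive, 184); (4296155137%positive, 235); (4297064467%positive, 67); (4297064482%positive, 214); (4297064707%positive, 208); (4297064737%positive, 187); (4297064962%positive, 118); (4297064977%positive, 130); (4297068547%positive, 214); (4297068577%positive, 136); (4297069057%positive, 55); (4297072642%positive, 52); (4297072657%positive, 115); (4297072897%positive, 1); (4297129987%positive, 145); (4297130017%positive, 16); (4297130497%positive, 55); (4297138177%positive, 25); (4297195522%positive, 94); (4297195537%positive, 52); (4297195777%positive, 220); (4297199617%positive, 190); (4311744547%positive, 13); (4311745027%positive, 28); (4311745057%positive, 10); (4311752707%positive, 172); (4311752737%positive, 37); (4311753217%positive, 43); (4311875587%positive, 241); (4311875617%positive, 190); (4311876097%positive, 109); (4311883777%positive, 208); (4313841667%positive, 166); (4313841697%positive, 208); (4313842177%positive, 139); (4313849857%positive, 22); (4313972737%positive, 199); (4328521747%positive, 235); (4328521762%positive, 229); (4328521987%positive, 91); (4328522017%positive,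 118); (4328522242%positive, 163); (4328522257%positive, 178); (4328525827%positive, 37); (4328525857%positive, 91); (4328526337%positive, 52); (4328529922%positive, 64); (4328529937%positive, 88); (4328530177%positive, 61); (4328587267%positive, 49); (4328587297%positive, 88); (4328587777%positive, 241); (4328595457%positive, 151); (4328652802%positive, 187); (4328652817%positive, 115); (4328653057%positive, 118); (4328656897%positive, 154); (4329570307%positive, 229); (4329570337%positive, 10); (4329570817%positive, 31); (4329578497%positive, 76); (4329701377%positive, 10); (4330618882%positive, 40); (4330618897%positive, 160); (4330619137%positive, 13); (4330622977%positive, 22); (4330684417%positive, 61); (4563402787%positive, 52); (4563403267%positive, 109); (4563403297%positive, 109); (4563410947%positive, 238); (4563410977%positive, 199); (4563411457%positive, 163); (4563533827%positive, 31); (4563533857%positive, 115); (4563534337%positive, 238); (4563542017%positive, 88); (4565499907%positive, 223); (4565499937%positive, 97); (4565500417%positive, 31); (4565508097%positive, 241); (4565630977%positive, 220); (4596957187%positive, 49); (4596957217%positive, 7); (4596957697%positive, 133); (4596965377%positive, 133); (4597088257%positive, 184); (4599054337%positive, 61); (4831838227%positive, 241); (4831838242%positive, 28); (4831838467%positive, 193); (4831838497%positive, 139); (4831838722%positive, 121); (4831838737%positive, 10); (4831842307%positive, 124); (4831842337%positive, 148); (4831842817%positive, 175); (4831846402%positive, 214); (4831846417%positive, 145); (4831846657%positive, 67); (4831903747%positive, 31); (4831903777%positive, 61); (4831904257%positive, 76); (4831911937%positive, 214); (4831969282%positive, 151); (4831969297%positive, 169); (4831969537%positive, 79); (4831973377%positive,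 217); (4832886787%positive, 100); (4832886817%positive, 217); (4832887297%positive, 223); (4832894977%positive, 46); (4833017857%positive, 160); (4833935362%positive, 10); (4833935377%positive, 97); (4833935617%positive, 178); (4833939457%positive, 163); (4834000897%positive, 139); (4848615427%positive, 205); (4848615457%positive, 172); (4848615937%positive, 136); (4848623617%positive, 235); (4848746497%positive, 124); (4850712577%positive, 118); (4865392642%positive, 196); (4865392657%positive, 160); (4865392897%positive, 118); (4865396737%positive, 199); (4865458177%positive, 31); (4866441217%positive, 37); (8589934867%positive, 31); (8589934882%positive, 151); (8589935122%positive, 184); (8589938707%positive, 79); (8589938722%positive, 19); (8589938947%positive, 121); (8589938977%positive, 58); (8589939202%positive, 13); (8589939217%positive, 1); (8589942802%positive, 115); (8589943042%positive, 220); (8589943057%positive, 55); (8590000147%positive, 217); (8590000162%positive, 220); (8590000387%positive, 130); (8590000417%positive, 73); (8590000642%positive, 22); (8590000657%positive, 52); (8590004227%positive, 163); (8590004257%positive, 112); (8590004737%positive, 235); (8590008322%positive, 172); (8590008337%positive, 100); (8590008577%positive, 91); (8590065682%positive, 139); (8590065922%positive, 52); (8590065937%positive, 163); (8590069762%positive, 40); (8590069777%positive, 4); (8590070017%positive, 31); (8590983187%positive, 67); (8590983202%positive, 70); (8590983427%positive, 91); (8590983457%positive, 205); (8590983682%positive, 64); (8590983697%positive, 22); (8590987267%positive, 16); (8590987297%positive, 73); (8590987777%positive, 163); (8590991362%positive, 214); (8590991377%positive, 34); (8590991617%positive, 100); (8591048707%positive, 217); (8591048737%positive, 61); (8591049217%positive,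 190); (8591056897%positive, 169); (8591114242%positive, 40); (8591114257%positive, 241); (8591114497%positive, 103); (8591118337%positive, 199); (8592031762%positive, 49); (8592032002%positive, 91); (8592032017%positive, 76); (8592035842%positive, 52); (8592035857%positive, 232); (8592036097%positive, 1); (8592097282%positive, 172); (8592097297%positive, 238); (8592097537%positive, 172); (8592101377%positive, 187); (8606711827%positive, 199); (8606711842%positive, 112); (8606712067%positive, 118); (8606712097%positive, 181); (8606712322%positive, 91); (8606712337%positive, 43); (8606715907%positive, 37); (8606715937%positive, 109); (8606716417%positive, 97); (8606720002%positive, 181); (8606720017%positive, 25); (8606720257%positive, 25); (8606777347%positive, 157); (8606777377%positive, 187); (8606777857%positive, 124); (8606785537%positive, 88); (8606842882%positive, 7); (8606842897%positive, 187); (8606843137%positive, 136); (8606846977%positive, 37); (8607760387%positive, 202); (8607760417%positive, 154); (8607760897%positive, 238); (8607768577%positive, 175); (8607891457%positive, 82); (8608808962%positive, 238); (8608808977%positive, 79); (8608809217%positive, 112); (8608813057%positive, 67); (8608874497%positive, 160); (8623489042%positive, 82); (8623489282%positive, 28); (8623489297%positive, 232); (8623493122%positive, 136); (8623493137%positive, 61); (8623493377%positive, 79); (8623554562%positive, 40); (8623554577%positive, 157); (8623554817%positive, 115); (8623558657%positive, 178); (8624537602%positive, 157); (8624537617%positive, 232); (8624537857%positive, 148); (8624541697%positive, 76); (8624603137%positive, 7); (8858370067%positive, 40); (8858370082%positive, 241); (8858370307%positive, 91); (8858370337%positive, 190); (8858370562%positive, 73); (8858370577%positive, 106); (8858374147%positive,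 67); (8858374177%positive, 181); (8858374657%positive, 172); (8858378242%positive, 121); (8858378257%positive, 232); (8858378497%positive, 1); (8858435587%positive, 28); (8858435617%positive, 229); (8858436097%positive, 73); (8858443777%positive, 112); (8858501122%positive, 31); (8858501137%positive, 121); (8858501377%positive, 229); (8858505217%positive, 223); (8859418627%positive, 133); (8859418657%positive, 241); (8859419137%positive, 40); (8859426817%positive, 169); (8859549697%positive, 13); (8860467202%positive, 205); (8860467217%positive, 4); (8860467457%positive, 211); (8860471297%positive, 214); (8860532737%positive, 1); (8875147267%positive, 112); (8875147297%positive, 205); (8875147777%positive, 151); (8875155457%positive, 79); (8875278337%positive, 22); (8877244417%positive, 160); (8891924482%positive, 112); (8891924497%positive, 4); (8891924737%positive, 88); (8891928577%positive, 151); (8891990017%positive, 199); (8892973057%positive, 115); (9126805522%positive, 52); (9126805762%positive, 40); (9126805777%positive, 73); (9126809602%positive, 133); (9126809617%positive, 19); (9126809857%positive, 130); (9126871042%positive, 112); (9126871057%positive, 13); (9126871297%positive, 94); (9126875137%positive, 151); (9127854082%positive, 226); (9127854097%positive, 52); (9127854337%positive, 187); (9127858177%positive, 37); (9127919617%positive, 13); (9143582722%positive, 7); (9143582737%positive, 106); (9143582977%positive, 136); (9143586817%positive, 154); (9143648257%positive, 121); (9144631297%positive, 1)].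
Definition q9 := 3. Definition d9 := 5.
Definition b10 : seq nat := [:: 0; 0; 0; 0; 1; 1; 1; 1; 2; 2].
Definition data10 : list (positive * nat) := [:: (1118499%positive, 44); (1118739%positive, 124); (1118754%positive, 29); (1122579%positive, 4); (1122594%positive, 109); (1122834%positive, 79); (1184019%positive, 119); (1184034%positive, 89); (1184274%positive, 44); (1188114%positive, 24); (2167059%positive, 109); (2167074%positive, 84); (2167314%positive, 19); (2171154%positive, 64); (2232594%positive, 29); (16847139%positive, 24); (16847379%positive, 54); (16847394%positive, 64); (16851219%positive, 124); (16851234%positive, 4); (16851474%positive, 44); (16912659%positive, 84); (16912674%positive, 74); (16912914%positive, 69); (16916754%positive, 99); (17830179%positive, 54); (17830419%positive, 54); (17830434%positive, 59); (17834259%positive, 124); (17834274%positive, 29); (17834514%positive, 109); (17891619%positive, 14); (17891859%positive, 119); (17891874%positive, 44); (17895459%positive, 24); (17895939%positive, 69); (17895969%positive, 54); (17899539%positive, 114); (17899554%positive, 49); (17899779%positive, 74); (17899809%positive, 74); (17900034%positive, 64); (17900049%positive, 109); (17957139%positive, 74); (17957154%positive, 49); (17957394%positive, 29); (17960979%positive, 114); (17960994%positive, 64); (17961219%positive, 124); (17961249%positive, 64); (17961474%positive, 9); (17961489%positive, 24); (17965074%positive, 9); (17965314%positive, 89); (17965329%positive, 79); (18878739%positive, 99); (18878754%positive, 34); (18878994%positive, 89); (18882834%positive, 24); (18940179%positive, 79); (18940194%positive, 69); (18940434%positive, 24); (18944019%positive, 4); (18944034%positive, 99); (18944259%positive, 14);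 (18944289%positive, 44); (18944514%positive, 14); (18944529%positive, 54); (18948114%positive, 29); (18948354%positive, 59); (18948369%positive, 19); (19005714%positive, 104); (19009554%positive, 54); (19009794%positive, 24); (19009809%positive, 29); (33624339%positive, 34); (33624354%positive, 29); (33624594%positive, 69); (33628434%positive, 44); (33689874%positive, 79); (34607379%positive, 14); (34607394%positive, 49); (34607634%positive, 124); (34611474%positive, 9); (34668819%positive, 64); (34668834%positive, 24); (34669074%positive, 14); (34672659%positive, 69); (34672674%positive, 29); (34672899%positive, 4); (34672929%positive, 64); (34673154%positive, 74); (34673169%positive, 19); (34676754%positive, 104); (34676994%positive, 44); (34677009%positive, 94); (34734354%positive, 14); (34738194%positive, 94); (34738434%positive, 49); (34738449%positive, 24); (35655954%positive, 24); (35717394%positive, 124); (35721234%positive, 14); (35721474%positive, 9); (35721489%positive, 19); (268505379%positive, 79); (268505619%positive, 19); (268505634%positive, 34); (268509459%positive, 109); (268509474%positive, 44); (268509714%positive, 19); (268570899%positive, 39); (268570914%positive, 49); (268571154%positive, 124); (268574994%positive, 39); (269488419%positive, 84); (269488659%positive, 124); (269488674%positive, 14); (269492499%positive, 99); (269492514%positive, 39); (269492754%positive, 119); (269549859%positive, 94); (269550099%positive, 54); (269550114%positive, 9); (269553699%positive, 124); (269554179%positive, 59); (269554209%positive, 104); (269557779%positive, 74); (269557794%positive, 94); (269558019%positive, 124); (269558049%positive, 79); (269558274%positive, 74); (269558289%positive, 59); (269615379%positive, 14); (269615394%positive, 39); (269615634%positive, 39); (269619219%positive, 39); (269619234%positive,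 49); (269619459%positive, 114); (269619489%positive, 39); (269619714%positive, 84); (269619729%positive, 89); (269623314%positive, 49); (269623554%positive, 24); (269623569%positive, 19); (270536979%positive, 44); (270536994%positive, 109); (270537234%positive, 119); (270541074%positive, 79); (270598419%positive, 124); (270598434%positive, 109); (270598674%positive, 49); (270602259%positive, 109); (270602274%positive, 49); (270602499%positive, 4); (270602529%positive, 84); (270602754%positive, 24); (270602769%positive, 39); (270606354%positive, 9); (270606594%positive, 104); (270606609%positive, 109); (270663954%positive, 34); (270667794%positive, 104); (270668034%positive, 64); (270668049%positive, 9); (285217059%positive, 34); (285217299%positive, 99); (285217314%positive, 69); (285221139%positive, 119); (285221154%positive, 89); (285221394%positive, 24); (285278499%positive, 34); (285278739%positive, 89); (285278754%positive, 24); (285282339%positive, 94); (285282819%positive, 39); (285282849%positive, 89); (285286419%positive, 84); (285286434%positive, 24); (285286659%positive, 39); (285286689%positive, 49); (285286914%positive, 14); (285286929%positive, 24); (285344019%positive, 19); (285344034%positive, 39); (285344274%positive, 34); (285347859%positive, 74); (285347874%positive, 74); (285348099%positive, 89); (285348129%positive, 44); (285348354%positive, 14); (285348369%positive, 109); (285351954%positive, 19); (285352194%positive, 89); (285352209%positive, 109); (286261539%positive, 64); (286261779%positive, 109); (286261794%positive, 84); (286265379%positive, 14); (286265859%positive, 124); (286265889%positive, 19); (286269459%positive, 99); (286269474%positive, 89); (286269699%positive, 14); (286269729%positive, 29); (286269954%positive, 44); (286269969%positive, 44); (286326819%positive, 89); (286327299%positive, 69); (286327329%positive, 89); (286334979%positive,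 69); (286335009%positive, 124); (286335489%positive, 49); (286392339%positive, 9); (286392354%positive, 109); (286392579%positive, 89); (286392609%positive, 84); (286392834%positive, 124); (286392849%positive, 14); (286396419%positive, 14); (286396449%positive, 49); (286396929%positive, 49); (286400514%positive, 64); (286400529%positive, 49); (286400769%positive, 24); (287310099%positive, 24); (287310114%positive, 104); (287310354%positive, 114); (287313939%positive, 29); (287313954%positive, 124); (287314179%positive, 74); (287314209%positive, 109); (287314434%positive, 109); (287314449%positive, 79); (287318034%positive, 59); (287318274%positive, 119); (287318289%positive, 109); (287375379%positive, 94); (287375394%positive, 4); (287375619%positive, 24); (287375649%positive, 109); (287375874%positive, 79); (287375889%positive, 4); (287379459%positive, 94); (287379489%positive, 74); (287379969%positive, 14); (287383554%positive, 9); (287383569%positive, 114); (287383809%positive, 59); (287440914%positive, 119); (287441154%positive, 104); (287441169%positive, 54); (287444994%positive, 109); (287445009%positive, 99); (287445249%positive, 94); (301994259%positive, 9); (301994274%positive, 94); (301994514%positive, 19); (301998354%positive, 14); (302055699%positive, 29); (302055714%positive, 39); (302055954%positive, 69); (302059539%positive, 9); (302059554%positive, 14); (302059779%positive, 39); (302059809%positive, 59); (302060034%positive, 44); (302060049%positive, 99); (302063634%positive, 124); (302063874%positive, 64); (302063889%positive, 84); (302121234%positive, 34); (302125074%positive, 84); (302125314%positive, 109); (302125329%positive, 34); (303038739%positive, 59); (303038754%positive, 4); (303038994%positive, 69); (303042579%positive, 14); (303042594%positive, 69); (303042819%positive, 109); (303042849%positive, 34); (303043074%positive, 49); (303043089%positive,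 64); (303046674%positive, 39); (303046914%positive, 54); (303046929%positive, 84); (303104019%positive, 19); (303104034%positive, 9); (303104259%positive, 89); (303104289%positive, 104); (303104514%positive, 119); (303104529%positive, 94); (303108099%positive, 4); (303108129%positive, 109); (303108609%positive, 89); (303112194%positive, 29); (303112209%positive, 34); (303112449%positive, 114); (303169554%positive, 69); (303169794%positive, 59); (303169809%positive, 49); (303173634%positive, 9); (303173649%positive, 59); (303173889%positive, 44); (304087314%positive, 59); (304091154%positive, 79); (304091394%positive, 49); (304091409%positive, 19); (304152594%positive, 44); (304152834%positive, 9); (304152849%positive, 99); (304156674%positive, 104); (304156689%positive, 39); (304156929%positive, 19); (536940819%positive, 19); (536940834%positive, 119); (536941074%positive, 64); (536944914%positive, 59); (537006354%positive, 54); (537923859%positive, 59); (537923874%positive, 79); (537924114%positive, 24); (537927954%positive, 124); (537985299%positive, 119); (537985314%positive, 54); (537985554%positive, 29); (537989139%positive, 54); (537989154%positive, 89); (537989379%positive, 79); (537989409%positive, 49); (537989634%positive, 24); (537989649%positive, 119); (537993234%positive, 49); (537993474%positive, 69); (537993489%positive, 49); (538050834%positive, 99); (538054674%positive, 14); (538054914%positive, 109); (538054929%positive, 64); (538972434%positive, 4); (539033874%positive, 79); (539037714%positive, 64); (539037954%positive, 114); (539037969%positive, 84); (553652499%positive, 4); (553652514%positive, 114); (553652754%positive, 124); (553656594%positive, 114); (553713939%positive, 59); (553713954%positive, 9); (553714194%positive, 119); (553717779%positive, 24); (553717794%positive, 84); (553718019%positive, 124); (553718049%positive, 74); (553718274%positive,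 29); (553718289%positive, 104); (553721874%positive, 114); (553722114%positive, 54); (553722129%positive, 109); (553779474%positive, 64); (553783314%positive, 114); (553783554%positive, 24); (553783569%positive, 24); (554696979%positive, 99); (554696994%positive, 79); (554697234%positive, 119); (554700819%positive, 14); (554700834%positive, 59); (554701059%positive, 104); (554701089%positive, 124); (554701314%positive, 4); (554701329%positive, 124); (554704914%positive, 29); (554705154%positive, 54); (554705169%positive, 4); (554762259%positive, 29); (554762274%positive, 49); (554762499%positive, 39); (554762529%positive, 54); (554762754%positive, 94); (554762769%positive, 34); (554766339%positive, 124); (554766369%positive, 39); (554766849%positive, 89); (554770434%positive, 84); (554770449%positive, 79); (554770689%positive, 109); (554827794%positive, 94); (554828034%positive, 34); (554828049%positive, 14); (554831874%positive, 74); (554831889%positive, 44); (554832129%positive, 14); (555745554%positive, 29); (555749394%positive, 4); (555749634%positive, 49); (555749649%positive, 84); (555810834%positive, 74); (555811074%positive, 54); (555811089%positive, 59); (555814914%positive, 29); (555814929%positive, 94); (555815169%positive, 64); (570429714%positive, 119); (570491154%positive, 84); (570494994%positive, 84); (570495234%positive, 99); (570495249%positive, 34); (571474194%positive, 104); (571478034%positive, 49); (571478274%positive, 39); (571478289%positive, 119); (571539474%positive, 34); (571539714%positive, 84); (571539729%positive, 9); (571543554%positive, 29); (571543569%positive, 14); (571543809%positive, 39); (4295037219%positive, 24); (4295037459%positive, 24); (4295037474%positive, 64); (4295041299%positive, 114); (4295041314%positive, 114); (4295041554%positive, 74); (4295102739%positive, 19); (4295102754%positive, 39); (4295102994%positive,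 84); (4295106834%positive, 89); (4296020259%positive, 29); (4296020499%positive, 79); (4296020514%positive, 124); (4296024339%positive, 49); (4296024354%positive, 114); (4296024594%positive, 44); (4296081699%positive, 64); (4296081939%positive, 79); (4296081954%positive, 109); (4296085539%positive, 109); (4296086019%positive, 54); (4296086049%positive, 74); (4296089619%positive, 19); (4296089634%positive, 64); (4296089859%positive, 64); (4296089889%positive, 64); (4296090114%positive, 14); (4296090129%positive, 14); (4296147219%positive, 64); (4296147234%positive, 84); (4296147474%positive, 64); (4296151059%positive, 124); (4296151074%positive, 84); (4296151299%positive, 114); (4296151329%positive, 34); (4296151554%positive, 49); (4296151569%positive, 74); (4296155154%positive, 79); (4296155394%positive, 119); (4296155409%positive, 14); (4297068819%positive, 69); (4297068834%positive, 99); (4297069074%positive, 49); (4297072914%positive, 79); (4297130259%positive, 119); (4297130274%positive, 54); (4297130514%positive, 109); (4297134099%positive, 69); (4297134114%positive, 74); (4297134339%positive, 124); (4297134369%positive, 104); (4297134594%positive, 94); (4297134609%positive, 49); (4297138194%positive, 14); (4297138434%positive, 64); (4297138449%positive, 24); (4297195794%positive, 9); (4297199634%positive, 89); (4297199874%positive, 19); (4297199889%positive, 94); (4311748899%positive, 79); (4311749139%positive, 44); (4311749154%positive, 54); (4311752979%positive, 99); (4311752994%positive, 104); (4311753234%positive, 114); (4311810339%positive, 114); (4311810579%positive, 79); (4311810594%positive, 4); (4311814179%positive, 69); (4311814659%positive, 64); (4311814689%positive, 94); (4311818259%positive, 99); (4311818274%positive, 49); (4311818499%positive, 109); (4311818529%positive,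 49); (4311818754%positive, 14); (4311818769%positive, 4); (4311875859%positive, 29); (4311875874%positive, 24); (4311876114%positive, 4); (4311879699%positive, 69); (4311879714%positive, 79); (4311879939%positive, 49); (4311879969%positive, 54); (4311880194%positive, 104); (4311880209%positive, 64); (4311883794%positive, 49); (4311884034%positive, 109); (4311884049%positive, 4); (4312793379%positive, 84); (4312793619%positive, 119); (4312793634%positive, 24); (4312797219%positive, 59); (4312797699%positive, 99); (4312797729%positive, 74); (4312801299%positive, 49); (4312801314%positive, 34); (4312801539%positive, 64); (4312801569%positive, 49); (4312801794%positive, 9); (4312801809%positive, 44); (4312858659%positive, 44); (4312859139%positive, 34); (4312859169%positive, 4); (4312866819%positive, 4); (4312866849%positive, 124); (4312867329%positive, 109); (4312924179%positive, 64); (4312924194%positive, 104); (4312924419%positive, 124); (4312924449%positive, 124); (4312924674%positive, 69); (4312924689%positive, 14); (4312928259%positive, 4); (4312928289%positive, 84); (4312928769%positive, 119); (4312932354%positive, 59); (4312932369%positive, 39); (4312932609%positive, 74); (4313841939%positive, 44); (4313841954%positive, 29); (4313842194%positive, 39); (4313845779%positive, 9); (4313845794%positive, 114); (4313846019%positive, 94); (4313846049%positive, 99); (4313846274%positive, 84); (4313846289%positive, 9); (4313849874%positive, 104); (4313850114%positive, 119); (4313850129%positive, 119); (4313907219%positive, 39); (4313907234%positive, 69); (4313907459%positive, 4); (4313907489%positive, 24); (4313907714%positive, 19); (4313907729%positive, 124); (4313911299%positive, 39); (4313911329%positive, 79); (4313911809%positive, 34); (4313915394%positive, 69); (4313915409%positive,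 29); (4313915649%positive, 29); (4313972754%positive, 54); (4313972994%positive, 124); (4313973009%positive, 119); (4313976834%positive, 109); (4313976849%positive, 49); (4313977089%positive, 109); (4328526099%positive, 34); (4328526114%positive, 84); (4328526354%positive, 4); (4328530194%positive, 59); (4328587539%positive, 114); (4328587554%positive, 94); (4328587794%positive, 124); (4328591379%positive, 119); (4328591394%positive, 39); (4328591619%positive, 39); (4328591649%positive, 59); (4328591874%positive, 89); (4328591889%positive, 59); (4328595474%positive, 124); (4328595714%positive, 49); (4328595729%positive, 124); (4328653074%positive, 109); (4328656914%positive, 59); (4328657154%positive, 104); (4328657169%positive, 119); (4329570579%positive, 94); (4329570594%positive, 69); (4329570834%positive, 4); (4329574419%positive, 39); (4329574434%positive, 89); (4329574659%positive, 69); (4329574689%positive, 79); (4329574914%positive, 64); (4329574929%positive, 59); (4329578514%positive, 104); (4329578754%positive, 49); (4329578769%positive, 9); (4329635859%positive, 64); (4329635874%positive, 79); (4329636099%positive, 59); (4329636129%positive, 74); (4329636354%positive, 39); (4329636369%positive, 109); (4329639939%positive, 64); (4329639969%positive, 4); (4329640449%positive, 104); (4329644034%positive, 4); (4329644049%positive, 34); (4329644289%positive, 84); (4329701394%positive, 119); (4329701634%positive, 54); (4329701649%positive, 109); (4329705474%positive, 39); (4329705489%positive, 64); (4329705729%positive, 24); (4330619154%positive, 4); (4330622994%positive, 69); (4330623234%positive, 39); (4330623249%positive, 14); (4330684434%positive, 49); (4330684674%positive, 64); (4330684689%positive, 54); (4330688514%positive, 19); (4330688529%positive, 94); (4330688769%positive,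 114); (4563407139%positive, 49); (4563407379%positive, 104); (4563407394%positive, 19); (4563411219%positive, 119); (4563411234%positive, 94); (4563411474%positive, 14); (4563468579%positive, 79); (4563468819%positive, 49); (4563468834%positive, 49); (4563472419%positive, 59); (4563472899%positive, 64); (4563472929%positive, 109); (4563476499%positive, 9); (4563476514%positive, 89); (4563476739%positive, 69); (4563476769%positive, 9); (4563476994%positive, 59); (4563477009%positive, 79); (4563534099%positive, 109); (4563534114%positive, 49); (4563534354%positive, 89); (4563537939%positive, 9); (4563537954%positive, 4); (4563538179%positive, 74); (4563538209%positive, 49); (4563538434%positive, 19); (4563538449%positive, 64); (4563542034%positive, 49); (4563542274%positive, 4); (4563542289%positive, 49); (4564451619%positive, 19); (4564451859%positive, 29); (4564451874%positive, 124); (4564455459%positive, 74); (4564455939%positive, 79); (4564455969%positive, 54); (4564459539%positive, 104); (4564459554%positive, 14); (4564459779%positive, 74); (4564459809%positive, 39); (4564460034%positive, 34); (4564460049%positive, 9); (4564516899%positive, 39); (4564517379%positive, 14); (4564517409%positive, 54); (4564525059%positive, 64); (4564525089%positive, 114); (4564525569%positive, 59); (4564582419%positive, 109); (4564582434%positive, 44); (4564582659%positive, 24); (4564582689%positive, 34); (4564582914%positive, 9); (4564582929%positive, 119); (4564586499%positive, 124); (4564586529%positive, 64); (4564587009%positive, 49); (4564590594%positive, 119); (4564590609%positive, 124); (4564590849%positive, 64); (4565500179%positive, 4); (4565500194%positive, 29); (4565500434%positive, 124); (4565504019%positive, 99); (4565504034%positive, 54); (4565504259%positive, 119); (4565504289%positive,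 4); (4565504514%positive, 124); (4565504529%positive, 119); (4565508114%positive, 124); (4565508354%positive, 39); (4565508369%positive, 94); (4565565459%positive, 54); (4565565474%positive, 74); (4565565699%positive, 39); (4565565729%positive, 59); (4565565954%positive, 119); (4565565969%positive, 114); (4565569539%positive, 99); (4565569569%positive, 54); (4565570049%positive, 24); (4565573634%positive, 114); (4565573649%positive, 124); (4565573889%positive, 99); (4565630994%positive, 49); (4565631234%positive, 99); (4565631249%positive, 49); (4565635074%positive, 89); (4565635089%positive, 4); (4565635329%positive, 94); (4580180259%positive, 54); (4580180499%positive, 39); (4580180514%positive, 74); (4580184099%positive, 34); (4580184579%positive, 109); (4580184609%positive, 44); (4580188179%positive, 39); (4580188194%positive, 44); (4580188419%positive, 99); (4580188449%positive, 89); (4580188674%positive, 69); (4580188689%positive, 14); (4580245539%positive, 49); (4580246019%positive, 39); (4580246049%positive, 84); (4580253699%positive, 14); (4580253729%positive, 94); (4580254209%positive, 99); (4580311059%positive, 4); (4580311074%positive, 29); (4580311299%positive, 54); (4580311329%positive, 14); (4580311554%positive, 74); (4580311569%positive, 104); (4580315139%positive, 24); (4580315169%positive, 79); (4580315649%positive, 74); (4580319234%positive, 124); (4580319249%positive, 124); (4580319489%positive, 99); (4581228579%positive, 59); (4581229059%positive, 64); (4581229089%positive, 4); (4581236739%positive, 29); (4581236769%positive, 114); (4581237249%positive, 99); (4581359619%positive, 74); (4581359649%positive, 94); (4581360129%positive, 44); (4581367809%positive, 59); (4582277139%positive, 109); (4582277154%positive, 59); (4582277379%positive, 39); (4582277409%positive,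 34); (4582277634%positive, 19); (4582277649%positive, 24); (4582281219%positive, 89); (4582281249%positive, 84); (4582281729%positive, 69); (4582285314%positive, 94); (4582285329%positive, 34); (4582285569%positive, 59); (4582342659%positive, 69); (4582342689%positive, 109); (4582343169%positive, 119); (4582350849%positive, 39); (4582408194%positive, 109); (4582408209%positive, 94); (4582408449%positive, 34); (4582412289%positive, 54); (4596957459%positive, 104); (4596957474%positive, 64); (4596957714%positive, 4); (4596961299%positive, 104); (4596961314%positive, 14); (4596961539%positive, 24); (4596961569%positive, 69); (4596961794%positive, 29); (4596961809%positive, 19); (4596965394%positive, 79); (4596965634%positive, 39); (4596965649%positive, 59); (4597022739%positive, 19); (4597022754%positive, 14); (4597022979%positive, 4); (4597023009%positive, 34); (4597023234%positive, 104); (4597023249%positive, 69); (4597026819%positive, 24); (4597026849%positive, 4); (4597027329%positive, 24); (4597030914%positive, 9); (4597030929%positive, 9); (4597031169%positive, 59); (4597088274%positive, 19); (4597088514%positive, 64); (4597088529%positive, 99); (4597092354%positive, 9); (4597092369%positive, 109); (4597092609%positive, 54); (4598005779%positive, 69); (4598005794%positive, 9); (4598006019%positive, 14); (4598006049%positive, 109); (4598006274%positive, 89); (4598006289%positive, 59); (4598009859%positive, 44); (4598009889%positive, 79); (4598010369%positive, 19); (4598013954%positive, 59); (4598013969%positive, 124); (4598014209%positive, 34); (4598071299%positive, 44); (4598071329%positive, 94); (4598071809%positive, 114); (4598079489%positive, 94); (4598136834%positive, 74); (4598136849%positive, 59); (4598137089%positive, 59); (4598140929%positive, 29); (4599054354%positive,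 14); (4599054594%positive, 24); (4599054609%positive, 124); (4599058434%positive, 44); (4599058449%positive, 59); (4599058689%positive, 69); (4599119874%positive, 14); (4599119889%positive, 54); (4599120129%positive, 39); (4599123969%positive, 39); (4831842579%positive, 44); (4831842594%positive, 44); (4831842834%positive, 69); (4831846674%positive, 24); (4831904019%positive, 124); (4831904034%positive, 94); (4831904274%positive, 104); (4831907859%positive, 24); (4831907874%positive, 79); (4831908099%positive, 99); (4831908129%positive, 89); (4831908354%positive, 44); (4831908369%positive, 29); (4831911954%positive, 74); (4831912194%positive, 9); (4831912209%positive, 49); (4831969554%positive, 94); (4831973394%positive, 99); (4831973634%positive, 84); (4831973649%positive, 4); (4832887059%positive, 124); (4832887074%positive, 64); (4832887314%positive, 74); (4832890899%positive, 79); (4832890914%positive, 124); (4832891139%positive, 9); (4832891169%positive, 124); (4832891394%positive, 4); (4832891409%positive, 54); (4832894994%positive, 19); (4832895234%positive, 14); (4832895249%positive, 29); (4832952339%positive, 84); (4832952354%positive, 64); (4832952579%positive, 114); (4832952609%positive, 89); (4832952834%positive, 64); (4832952849%positive, 84); (4832956419%positive, 89); (4832956449%positive, 124); (4832956929%positive, 19); (4832960514%positive, 99); (4832960529%positive, 104); (4832960769%positive, 14); (4833017874%positive, 9); (4833018114%positive, 64); (4833018129%positive, 9); (4833021954%positive, 89); (4833021969%positive, 29); (4833022209%positive, 79); (4833935634%positive, 29); (4833939474%positive, 84); (4833939714%positive, 124); (4833939729%positive, 79); (4834000914%positive, 119); (4834001154%positive, 124); (4834001169%positive, 119); (4834004994%positive,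 19); (4834005009%positive, 59); (4834005249%positive, 54); (4848615699%positive, 124); (4848615714%positive, 4); (4848615954%positive, 34); (4848619539%positive, 119); (4848619554%positive, 64); (4848619779%positive, 104); (4848619809%positive, 94); (4848620034%positive, 39); (4848620049%positive, 69); (4848623634%positive, 59); (4848623874%positive, 49); (4848623889%positive, 74); (4848680979%positive, 114); (4848680994%positive, 44); (4848681219%positive, 14); (4848681249%positive, 64); (4848681474%positive, 29); (4848681489%positive, 79); (4848685059%positive, 114); (4848685089%positive, 24); (4848685569%positive, 29); (4848689154%positive, 44); (4848689169%positive, 14); (4848689409%positive, 124); (4848746514%positive, 54); (4848746754%positive, 29); (4848746769%positive, 84); (4848750594%positive, 39); (4848750609%positive, 59); (4848750849%positive, 104); (4849664019%positive, 39); (4849664034%positive, 39); (4849664259%positive, 89); (4849664289%positive, 54); (4849664514%positive, 9); (4849664529%positive, 94); (4849668099%positive, 24); (4849668129%positive, 89); (4849668609%positive, 44); (4849672194%positive, 109); (4849672209%positive, 74); (4849672449%positive, 39); (4849729539%positive, 39); (4849729569%positive, 29); (4849730049%positive, 14); (4849737729%positive, 54); (4849795074%positive, 4); (4849795089%positive, 54); (4849795329%positive, 9); (4849799169%positive, 59); (4850712594%positive, 19); (4850712834%positive, 109); (4850712849%positive, 84); (4850716674%positive, 94); (4850716689%positive, 114); (4850716929%positive, 54); (4850778114%positive, 114); (4850778129%positive, 99); (4850778369%positive, 109); (4850782209%positive, 29); (4865392914%positive, 84); (4865396754%positive, 9); (4865396994%positive, 69); (4865397009%positive, 29); (4865458194%positive,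 64); (4865458434%positive, 79); (4865458449%positive, 69); (4865462274%positive, 49); (4865462289%positive, 39); (4865462529%positive, 89); (4866441234%positive, 99); (4866441474%positive, 14); (4866441489%positive, 29); (4866445314%positive, 114); (4866445329%positive, 124); (4866445569%positive, 44); (4866506754%positive, 29); (4866506769%positive, 64); (4866507009%positive, 124); (4866510849%positive, 114); (8590004499%positive, 49); (8590004514%positive, 89); (8590004754%positive, 34); (8590008594%positive, 44); (8590070034%positive, 34); (8590987539%positive, 29); (8590987554%positive, 94); (8590987794%positive, 9); (8590991634%positive, 74); (8591048979%positive, 109); (8591048994%positive, 114); (8591049234%positive, 124); (8591052819%positive, 29); (8591052834%positive, 24); (8591053059%positive, 124); (8591053089%positive, 44); (8591053314%positive, 24); (8591053329%positive, 29); (8591056914%positive, 99); (8591057154%positive, 89); (8591057169%positive, 99); (8591114514%positive, 59); (8591118354%positive, 54); (8591118594%positive, 89); (8591118609%positive, 79); (8592036114%positive, 79); (8592097554%positive, 59); (8592101394%positive, 64); (8592101634%positive, 54); (8592101649%positive, 99); (8606716179%positive, 114); (8606716194%positive, 109); (8606716434%positive, 114); (8606720274%positive, 104); (8606777619%positive, 39); (8606777634%positive, 59); (8606777874%positive, 54); (8606781459%positive, 84); (8606781474%positive, 24); (8606781699%positive, 59); (8606781729%positive, 119); (8606781954%positive, 99); (8606781969%positive, 9); (8606785554%positive, 44); (8606785794%positive, 54); (8606785809%positive, 104); (8606843154%positive, 104); (8606846994%positive, 104); (8606847234%positive, 94); (8606847249%positive, 89); (8607760659%positive, 44); (8607760674%positive,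 19); (8607760914%positive, 109); (8607764499%positive, 4); (8607764514%positive, 24); (8607764739%positive, 49); (8607764769%positive, 114); (8607764994%positive, 79); (8607765009%positive, 44); (8607768594%positive, 89); (8607768834%positive, 34); (8607768849%positive, 99); (8607825939%positive, 109); (8607825954%positive, 64); (8607826179%positive, 69); (8607826209%positive, 69); (8607826434%positive, 84); (8607826449%positive, 44); (8607830019%positive, 49); (8607830049%positive, 54); (8607830529%positive, 104); (8607834114%positive, 54); (8607834129%positive, 4); (8607834369%positive, 34); (8607891474%positive, 74); (8607891714%positive, 49); (8607891729%positive, 4); (8607895554%positive, 4); (8607895569%positive, 34); (8607895809%positive, 44); (8608809234%positive, 124); (8608813074%positive, 94); (8608813314%positive, 99); (8608813329%positive, 19); (8608874514%positive, 99); (8608874754%positive, 54); (8608874769%positive, 94); (8608878594%positive, 29); (8608878609%positive, 94); (8608878849%positive, 14); (8623493394%positive, 79); (8623554834%positive, 69); (8623558674%positive, 34); (8623558914%positive, 109); (8623558929%positive, 119); (8624537874%positive, 89); (8624541714%positive, 39); (8624541954%positive, 69); (8624541969%positive, 114); (8624603154%positive, 89); (8624603394%positive, 124); (8624603409%positive, 54); (8624607234%positive, 74); (8624607249%positive, 9); (8624607489%positive, 24); (8858374419%positive, 29); (8858374434%positive, 99); (8858374674%positive, 29); (8858378514%positive, 34); (8858435859%positive, 124); (8858435874%positive, 59); (8858436114%positive, 14); (8858439699%positive, 29); (8858439714%positive, 44); (8858439939%positive, 34); (8858439969%positive, 24); (8858440194%positive, 64); (8858440209%positive, 59); (8858443794%positive,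 124); (8858444034%positive, 104); (8858444049%positive, 84); (8858501394%positive, 99); (8858505234%positive, 79); (8858505474%positive, 94); (8858505489%positive, 14); (8859418899%positive, 59); (8859418914%positive, 54); (8859419154%positive, 34); (8859422739%positive, 59); (8859422754%positive, 49); (8859422979%positive, 54); (8859423009%positive, 24); (8859423234%positive, 44); (8859423249%positive, 69); (8859426834%positive, 104); (8859427074%positive, 24); (8859427089%positive, 29); (8859484179%positive, 29); (8859484194%positive, 29); (8859484419%positive, 109); (8859484449%positive, 79); (8859484674%positive, 44); (8859484689%positive, 39); (8859488259%positive, 39); (8859488289%positive, 84); (8859488769%positive, 44); (8859492354%positive, 54); (8859492369%positive, 84); (8859492609%positive, 94); (8859549714%positive, 119); (8859549954%positive, 79); (8859549969%positive, 9); (8859553794%positive, 89); (8859553809%positive, 119); (8859554049%positive, 114); (8860467474%positive, 49); (8860471314%positive, 9); (8860471554%positive, 99); (8860471569%positive, 99); (8860532754%positive, 114); (8860532994%positive, 34); (8860533009%positive, 104); (8860536834%positive, 109); (8860536849%positive, 29); (8860537089%positive, 44); (8875147539%positive, 119); (8875147554%positive, 69); (8875147794%positive, 119); (8875151379%positive, 44); (8875151394%positive, 109); (8875151619%positive, 74); (8875151649%positive, 39); (8875151874%positive, 4); (8875151889%positive, 44); (8875155474%positive, 89); (8875155714%positive, 79); (8875155729%positive, 84); (8875212819%positive, 29); (8875212834%positive, 114); (8875213059%positive, 109); (8875213089%positive, 19); (8875213314%positive, 14); (8875213329%positive, 94); (8875216899%positive, 59); (8875216929%positive, 14); (8875217409%positive,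 4); (8875220994%positive, 104); (8875221009%positive, 84); (8875221249%positive, 39); (8875278354%positive, 19); (8875278594%positive, 14); (8875278609%positive, 44); (8875282434%positive, 99); (8875282449%positive, 14); (8875282689%positive, 69); (8876195859%positive, 59); (8876195874%positive, 99); (8876196099%positive, 39); (8876196129%positive, 64); (8876196354%positive, 59); (8876196369%positive, 49); (8876199939%positive, 14); (8876199969%positive, 99); (8876200449%positive, 114); (8876204034%positive, 64); (8876204049%positive, 34); (8876204289%positive, 104); (8876261379%positive, 39); (8876261409%positive, 124); (8876261889%positive, 124); (8876269569%positive, 24); (8876326914%positive, 34); (8876326929%positive, 69); (8876327169%positive, 29); (8876331009%positive, 39); (8877244434%positive, 14); (8877244674%positive, 114); (8877244689%positive, 64); (8877248514%positive, 14); (8877248529%positive, 39); (8877248769%positive, 94); (8877309954%positive, 14); (8877309969%positive, 89); (8877310209%positive, 119); (8877314049%positive, 59); (8891924754%positive, 84); (8891928594%positive, 34); (8891928834%positive, 44); (8891928849%positive, 69); (8891990034%positive, 84); (8891990274%positive, 4); (8891990289%positive, 29); (8891994114%positive, 94); (8891994129%positive, 109); (8891994369%positive, 44); (8892973074%positive, 29); (8892973314%positive, 104); (8892973329%positive, 49); (8892977154%positive, 19); (8892977169%positive, 124); (8892977409%positive, 84); (8893038594%positive, 94); (8893038609%positive, 119); (8893038849%positive, 79); (8893042689%positive, 124); (9126809874%positive, 24); (9126871314%positive, 109); (9126875154%positive, 124); (9126875394%positive, 49); (9126875409%positive, 84); (9127854354%positive, 54); (9127858194%positive, 24); (9127858434%positive,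 29); (9127858449%positive, 94); (9127919634%positive, 34); (9127919874%positive, 9); (9127919889%positive, 34); (9127923714%positive, 24); (9127923729%positive, 29); (9127923969%positive, 19); (9143582994%positive, 69); (9143586834%positive, 104); (9143587074%positive, 89); (9143587089%positive, 49); (9143648274%positive, 114); (9143648514%positive, 114); (9143648529%positive, 34); (9143652354%positive, 89); (9143652369%positive, 44); (9143652609%positive, 9); (9144631314%positive, 54); (9144631554%positive, 84); (9144631569%positive, 79); (9144635394%positive, 84); (9144635409%positive, 4); (9144635649%positive, 119); (9144696834%positive, 94); (9144696849%positive, 119); (9144697089%positive, 104); (9144700929%positive, 79); (68719546659%positive, 99); (68719546899%positive, 104); (68719546914%positive, 9); (68719550739%positive, 104); (68719550754%positive, 84); (68719550994%positive, 119); (68719612179%positive, 19); (68719612194%positive, 104); (68719612434%positive, 39); (68719616274%positive, 14); (68720529699%positive, 54); (68720529939%positive, 119); (68720529954%positive, 69); (68720533779%positive, 34); (68720533794%positive, 89); (68720534034%positive, 89); (68720591139%positive, 69); (68720591379%positive, 109); (68720591394%positive, 34); (68720594979%positive, 19); (68720595459%positive, 39); (68720595489%positive, 64); (68720599059%positive, 64); (68720599074%positive, 64); (68720599299%positive, 74); (68720599329%positive, 119); (68720599554%positive, 104); (68720599569%positive, 104); (68720656659%positive, 14); (68720656674%positive, 14); (68720656914%positive, 74); (68720660499%positive, 44); (68720660514%positive, 59); (68720660739%positive, 24); (68720660769%positive, 74); (68720660994%positive, 79); (68720661009%positive, 39); (68720664594%positive, 14); (68720664834%positive, 54); (68720664849%positive,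 79); (68721578259%positive, 34); (68721578274%positive, 49); (68721578514%positive, 109); (68721582354%positive, 24); (68721639699%positive, 24); (68721639714%positive, 79); (68721639954%positive, 69); (68721643539%positive, 124); (68721643554%positive, 14); (68721643779%positive, 49); (68721643809%positive, 109); (68721644034%positive, 119); (68721644049%positive, 84); (68721647634%positive, 109); (68721647874%positive, 74); (68721647889%positive, 99); (68721705234%positive, 19); (68721709074%positive, 64); (68721709314%positive, 9); (68721709329%positive, 109); (68736258339%positive, 39); (68736258579%positive, 69); (68736258594%positive, 99); (68736262419%positive, 114); (68736262434%positive, 79); (68736262674%positive, 104); (68736319779%positive, 34); (68736320019%positive, 74); (68736320034%positive, 104); (68736323619%positive, 44); (68736324099%positive, 94); (68736324129%positive, 9); (68736327699%positive, 59); (68736327714%positive, 44); (68736327939%positive, 19); (68736327969%positive, 19); (68736328194%positive, 94); (68736328209%positive, 79); (68736385299%positive, 14); (68736385314%positive, 59); (68736385554%positive, 79); (68736389139%positive, 84); (68736389154%positive, 24); (68736389379%positive, 49); (68736389409%positive, 4); (68736389634%positive, 89); (68736389649%positive, 14); (68736393234%positive, 114); (68736393474%positive, 44); (68736393489%positive, 24); (68737302819%positive, 39); (68737303059%positive, 19); (68737303074%positive, 39); (68737306659%positive, 64); (68737307139%positive, 54); (68737307169%positive, 84); (68737310739%positive, 69); (68737310754%positive, 94); (68737310979%positive, 104); (68737311009%positive, 104); (68737311234%positive, 109); (68737311249%positive, 114); (68737368099%positive, 59); (68737368579%positive, 39); (68737368609%positive, 109); (68737376259%positive, 64); (68737376289%positive,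 64); (68737376769%positive, 104); (68737433619%positive, 124); (68737433634%positive, 49); (68737433859%positive, 4); (68737433889%positive, 89); (68737434114%positive, 24); (68737434129%positive, 64); (68737437699%positive, 99); (68737437729%positive, 19); (68737438209%positive, 119); (68737441794%positive, 29); (68737441809%positive, 34); (68737442049%positive, 54); (68738351379%positive, 54); (68738351394%positive, 19); (68738351634%positive, 4); (68738355219%positive, 89); (68738355234%positive, 99); (68738355459%positive, 14); (68738355489%positive, 54); (68738355714%positive, 4); (68738355729%positive, 119); (68738359314%positive, 119); (68738359554%positive, 9); (68738359569%positive, 49); (68738416659%positive, 64); (68738416674%positive, 54); (68738416899%positive, 54); (68738416929%positive, 54); (68738417154%positive, 79); (68738417169%positive, 54); (68738420739%positive, 39); (68738420769%positive, 29); (68738421249%positive, 29); (68738424834%positive, 19); (68738424849%positive, 14); (68738425089%positive, 79); (68738482194%positive, 19); (68738482434%positive, 94); (68738482449%positive, 14); (68738486274%positive, 69); (68738486289%positive, 119); (68738486529%positive, 24); (68753035539%positive, 44); (68753035554%positive, 4); (68753035794%positive, 84); (68753039634%positive, 34); (68753096979%positive, 34); (68753096994%positive, 39); (68753097234%positive, 119); (68753100819%positive, 54); (68753100834%positive, 114); (68753101059%positive, 124); (68753101089%positive, 19); (68753101314%positive, 54); (68753101329%positive, 124); (68753104914%positive, 79); (68753105154%positive, 74); (68753105169%positive, 109); (68753162514%positive, 39); (68753166354%positive, 79); (68753166594%positive, 64); (68753166609%positive, 19); (68754080019%positive, 19); (68754080034%positive, 109); (68754080274%positive, 9); (68754083859%positive,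 49); (68754083874%positive, 64); (68754084099%positive, 59); (68754084129%positive, 74); (68754084354%positive, 99); (68754084369%positive, 119); (68754087954%positive, 84); (68754088194%positive, 109); (68754088209%positive, 34); (68754145299%positive, 114); (68754145314%positive, 54); (68754145539%positive, 29); (68754145569%positive, 9); (68754145794%positive, 89); (68754145809%positive, 24); (68754149379%positive, 49); (68754149409%positive, 59); (68754149889%positive, 104); (68754153474%positive, 54); (68754153489%positive, 4); (68754153729%positive, 54); (68754210834%positive, 54); (68754211074%positive, 69); (68754211089%positive, 49); (68754214914%positive, 74); (68754214929%positive, 124); (68754215169%positive, 59); (68755128594%positive, 89); (68755132434%positive, 104); (68755132674%positive, 84); (68755132689%positive, 9); (68755193874%positive, 14); (68755194114%positive, 24); (68755194129%positive, 89); (68755197954%positive, 104); (68755197969%positive, 119); (68755198209%positive, 114); (68987916579%positive, 69); (68987916819%positive, 54); (68987916834%positive, 104); (68987920659%positive, 124); (68987920674%positive, 69); (68987920914%positive, 119); (68987978019%positive, 19); (68987978259%positive, 4); (68987978274%positive, 19); (68987981859%positive, 44); (68987982339%positive, 114); (68987982369%positive, 109); (68987985939%positive, 54); (68987985954%positive, 49); (68987986179%positive, 79); (68987986209%positive, 79); (68987986434%positive, 29); (68987986449%positive, 39); (68988043539%positive, 104); (68988043554%positive, 4); (68988043794%positive, 29); (68988047379%positive, 109); (68988047394%positive, 64); (68988047619%positive, 34); (68988047649%positive, 99); (68988047874%positive, 84); (68988047889%positive, 54); (68988051474%positive, 114); (68988051714%positive, 94); (68988051729%positive, 89); (68988961059%positive,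 104); (68988961299%positive, 84); (68988961314%positive, 64); (68988964899%positive, 114); (68988965379%positive, 104); (68988965409%positive, 64); (68988968979%positive, 94); (68988968994%positive, 124); (68988969219%positive, 124); (68988969249%positive, 104); (68988969474%positive, 104); (68988969489%positive, 19); (68989026339%positive, 124); (68989026819%positive, 24); (68989026849%positive, 14); (68989034499%positive, 99); (68989034529%positive, 74); (68989035009%positive, 84); (68989091859%positive, 4); (68989091874%positive, 29); (68989092099%positive, 19); (68989092129%positive, 114); (68989092354%positive, 29); (68989092369%positive, 104); (68989095939%positive, 99); (68989095969%positive, 84); (68989096449%positive, 74); (68989100034%positive, 94); (68989100049%positive, 39); (68989100289%positive, 49); (68990009619%positive, 99); (68990009634%positive, 89); (68990009874%positive, 94); (68990013459%positive, 74); (68990013474%positive, 59); (68990013699%positive, 59); (68990013729%positive, 99); (68990013954%positive, 39); (68990013969%positive, 84); (68990017554%positive, 59); (68990017794%positive, 69); (68990017809%positive, 34); (68990074899%positive, 84); (68990074914%positive, 49); (68990075139%positive, 59); (68990075169%positive, 79); (68990075394%positive, 79); (68990075409%positive, 39); (68990078979%positive, 74); (68990079009%positive, 9); (68990079489%positive, 19); (68990083074%positive, 4); (68990083089%positive, 9); (68990083329%positive, 59); (68990140434%positive, 84); (68990140674%positive, 39); (68990140689%positive, 14); (68990144514%positive, 59); (68990144529%positive, 99); (68990144769%positive, 14); (69004689699%positive, 84); (69004689939%positive, 109); (69004689954%positive, 99); (69004693539%positive, 44); (69004694019%positive, 19); (69004694049%positive, 69); (69004697619%positive, 54); (69004697634%positive,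 99); (69004697859%positive, 114); (69004697889%positive, 59); (69004698114%positive, 114); (69004698129%positive, 34); (69004754979%positive, 84); (69004755459%positive, 49); (69004755489%positive, 54); (69004763139%positive, 69); (69004763169%positive, 89); (69004763649%positive, 54); (69004820499%positive, 19); (69004820514%positive, 34); (69004820739%positive, 9); (69004820769%positive, 64); (69004820994%positive, 49); (69004821009%positive, 69); (69004824579%positive, 44); (69004824609%positive, 34); (69004825089%positive, 59); (69004828674%positive, 94); (69004828689%positive, 19); (69004828929%positive, 59); (69005738019%positive, 99); (69005738499%positive, 49); (69005738529%positive, 89); (69005746179%positive, 89); (69005746209%positive, 99); (69005746689%positive, 24); (69005869059%positive, 114); (69005869089%positive, 64); (69005869569%positive, 34); (69005877249%positive, 4); (69006786579%positive, 34); (69006786594%positive, 39); (69006786819%positive, 44); (69006786849%positive, 94); (69006787074%positive, 84); (69006787089%positive, 29); (69006790659%positive, 9); (69006790689%positive, 39); (69006791169%positive, 119); (69006794754%positive, 29); (69006794769%positive, 4); (69006795009%positive, 119); (69006852099%positive, 89); (69006852129%positive, 104); (69006852609%positive, 24); (69006860289%positive, 104); (69006917634%positive, 84); (69006917649%positive, 44); (69006917889%positive, 64); (69006921729%positive, 74); (69021466899%positive, 59); (69021466914%positive, 89); (69021467154%positive, 54); (69021470739%positive, 59); (69021470754%positive, 4); (69021470979%positive, 4); (69021471009%positive, 49); (69021471234%positive, 74); (69021471249%positive, 29); (69021474834%positive, 64); (69021475074%positive, 64); (69021475089%positive, 64); (69021532179%positive, 84); (69021532194%positive, 69); (69021532419%positive,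 74); (69021532449%positive, 54); (69021532674%positive, 59); (69021532689%positive, 69); (69021536259%positive, 14); (69021536289%positive, 124); (69021536769%positive, 19); (69021540354%positive, 9); (69021540369%positive, 99); (69021540609%positive, 104); (69021597714%positive, 39); (69021597954%positive, 54); (69021597969%positive, 89); (69021601794%positive, 119); (69021601809%positive, 114); (69021602049%positive, 99); (69022515219%positive, 34); (69022515234%positive, 69); (69022515459%positive, 104); (69022515489%positive, 24); (69022515714%positive, 99); (69022515729%positive, 64); (69022519299%positive, 94); (69022519329%positive, 24); (69022519809%positive, 79); (69022523394%positive, 74); (69022523409%positive, 49); (69022523649%positive, 39); (69022580739%positive, 34); (69022580769%positive, 124); (69022581249%positive, 79); (69022588929%positive, 44); (69022646274%positive, 84); (69022646289%positive, 114); (69022646529%positive, 119); (69022650369%positive, 79); (69023563794%positive, 104); (69023564034%positive, 49); (69023564049%positive, 114); (69023567874%positive, 124); (69023567889%positive, 59); (69023568129%positive, 74); (69023629314%positive, 19); (69023629329%positive, 14); (69023629569%positive, 14); (69023633409%positive, 44); (69256352019%positive, 49); (69256352034%positive, 59); (69256352274%positive, 19); (69256356114%positive, 124); (69256413459%positive, 104); (69256413474%positive, 119); (69256413714%positive, 114); (69256417299%positive, 24); (69256417314%positive, 19); (69256417539%positive, 34); (69256417569%positive, 59); (69256417794%positive, 94); (69256417809%positive, 59); (69256421394%positive, 49); (69256421634%positive, 64); (69256421649%positive, 74); (69256478994%positive, 14); (69256482834%positive, 104); (69256483074%positive, 64); (69256483089%positive, 14); (69257396499%positive, 84); (69257396514%positive,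 79); (69257396754%positive, 19); (69257400339%positive, 89); (69257400354%positive, 9); (69257400579%positive, 89); (69257400609%positive, 64); (69257400834%positive, 49); (69257400849%positive, 104); (69257404434%positive, 24); (69257404674%positive, 114); (69257404689%positive, 79); (69257461779%positive, 34); (69257461794%positive, 9); (69257462019%positive, 69); (69257462049%positive, 34); (69257462274%positive, 9); (69257462289%positive, 44); (69257465859%positive, 64); (69257465889%positive, 69); (69257466369%positive, 109); (69257469954%positive, 94); (69257469969%positive, 59); (69257470209%positive, 79); (69257527314%positive, 104); (69257527554%positive, 29); (69257527569%positive, 39); (69257531394%positive, 69); (69257531409%positive, 14); (69257531649%positive, 49); (69258445074%positive, 69); (69258448914%positive, 124); (69258449154%positive, 49); (69258449169%positive, 124); (69258510354%positive, 74); (69258510594%positive, 4); (69258510609%positive, 14); (69258514434%positive, 119); (69258514449%positive, 124); (69258514689%positive, 24); (69273125139%positive, 34); (69273125154%positive, 69); (69273125394%positive, 104); (69273128979%positive, 4); (69273128994%positive, 44); (69273129219%positive, 104); (69273129249%positive, 124); (69273129474%positive, 49); (69273129489%positive, 84); (69273133074%positive, 124); (69273133314%positive, 69); (69273133329%positive, 29); (69273190419%positive, 49); (69273190434%positive, 99); (69273190659%positive, 24); (69273190689%positive, 29); (69273190914%positive, 74); (69273190929%positive, 29); (69273194499%positive, 49); (69273194529%positive, 14); (69273195009%positive, 49); (69273198594%positive, 9); (69273198609%positive, 34); (69273198849%positive, 79); (69273255954%positive, 59); (69273256194%positive, 119); (69273256209%positive, 59); (69273260034%positive, 124); (69273260049%positive,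 59); (69273260289%positive, 124); (69274173459%positive, 99); (69274173474%positive, 19); (69274173699%positive, 49); (69274173729%positive, 79); (69274173954%positive, 54); (69274173969%positive, 19); (69274177539%positive, 39); (69274177569%positive, 94); (69274178049%positive, 64); (69274181634%positive, 44); (69274181649%positive, 9); (69274181889%positive, 119); (69274238979%positive, 44); (69274239009%positive, 24); (69274239489%positive, 79); (69274247169%positive, 39); (69274304514%positive, 99); (69274304529%positive, 24); (69274304769%positive, 124); (69274308609%positive, 104); (69275222034%positive, 9); (69275222274%positive, 29); (69275222289%positive, 99); (69275226114%positive, 14); (69275226129%positive, 24); (69275226369%positive, 54); (69275287554%positive, 29); (69275287569%positive, 79); (69275287809%positive, 59); (69275291649%positive, 4); (69289902354%positive, 124); (69289906194%positive, 4); (69289906434%positive, 64); (69289906449%positive, 69); (69289967634%positive, 104); (69289967874%positive, 74); (69289967889%positive, 94); (69289971714%positive, 84); (69289971729%positive, 9); (69289971969%positive, 124); (69290950674%positive, 4); (69290950914%positive, 49); (69290950929%positive, 44); (69290954754%positive, 79); (69290954769%positive, 99); (69290955009%positive, 99); (69291016194%positive, 94); (69291016209%positive, 124); (69291016449%positive, 94); (69291020289%positive, 39); (73014448419%positive, 119); (73014448659%positive, 114); (73014448674%positive, 74); (73014452499%positive, 44); (73014452514%positive, 19); (73014452754%positive, 64); (73014509859%positive, 109); (73014510099%positive, 14); (73014510114%positive, 69); (73014513699%positive, 99); (73014514179%positive, 39); (73014514209%positive, 64); (73014517779%positive, 114); (73014517794%positive, 104); (73014518019%positive, 99); (73014518049%positive,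 9); (73014518274%positive, 109); (73014518289%positive, 44); (73014575379%positive, 104); (73014575394%positive, 29); (73014575634%positive, 39); (73014579219%positive, 109); (73014579234%positive, 39); (73014579459%positive, 54); (73014579489%positive, 9); (73014579714%positive, 69); (73014579729%positive, 44); (73014583314%positive, 74); (73014583554%positive, 64); (73014583569%positive, 14); (73015492899%positive, 79); (73015493139%positive, 34); (73015493154%positive, 69); (73015496739%positive, 89); (73015497219%positive, 54); (73015497249%positive, 84); (73015500819%positive, 39); (73015500834%positive, 79); (73015501059%positive, 59); (73015501089%positive, 44); (73015501314%positive, 84); (73015501329%positive, 79); (73015558179%positive, 59); (73015558659%positive, 9); (73015558689%positive, 79); (73015566339%positive, 59); (73015566369%positive, 54); (73015566849%positive, 49); (73015623699%positive, 14); (73015623714%positive, 109); (73015623939%positive, 44); (73015623969%positive, 59); (73015624194%positive, 104); (73015624209%positive, 29); (73015627779%positive, 9); (73015627809%positive, 54); (73015628289%positive, 14); (73015631874%positive, 29); (73015631889%positive, 114); (73015632129%positive, 4); (73016541459%positive, 69); (73016541474%positive, 54); (73016541714%positive, 109); (73016545299%positive, 19); (73016545314%positive, 94); (73016545539%positive, 104); (73016545569%positive, 124); (73016545794%positive, 9); (73016545809%positive, 9); (73016549394%positive, 89); (73016549634%positive, 54); (73016549649%positive, 94); (73016606739%positive, 69); (73016606754%positive, 79); (73016606979%positive, 84); (73016607009%positive, 59); (73016607234%positive, 4); (73016607249%positive, 119); (73016610819%positive, 84); (73016610849%positive, 19); (73016611329%positive, 104); (73016614914%positive, 109); (73016614929%positive,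 14); (73016615169%positive, 9); (73016672274%positive, 84); (73016672514%positive, 74); (73016672529%positive, 9); (73016676354%positive, 29); (73016676369%positive, 94); (73016676609%positive, 69); (73031221539%positive, 19); (73031221779%positive, 79); (73031221794%positive, 34); (73031225379%positive, 114); (73031225859%positive, 79); (73031225889%positive, 109); (73031229459%positive, 114); (73031229474%positive, 109); (73031229699%positive, 44); (73031229729%positive, 99); (73031229954%positive, 64); (73031229969%positive, 89); (73031286819%positive, 49); (73031287299%positive, 64); (73031287329%positive, 69); (73031294979%positive, 34); (73031295009%positive, 94); (73031295489%positive, 54); (73031352339%positive, 54); (73031352354%positive, 9); (73031352579%positive, 124); (73031352609%positive, 104); (73031352834%positive, 29); (73031352849%positive, 84); (73031356419%positive, 124); (73031356449%positive, 99); (73031356929%positive, 34); (73031360514%positive, 59); (73031360529%positive, 54); (73031360769%positive, 44); (73032269859%positive, 89); (73032270339%positive, 39); (73032270369%positive, 99); (73032278019%positive, 34); (73032278049%positive, 109); (73032278529%positive, 94); (73032400899%positive, 114); (73032400929%positive, 49); (73032401409%positive, 79); (73032409089%positive, 29); (73033318419%positive, 119); (73033318434%positive, 64); (73033318659%positive, 79); (73033318689%positive, 109); (73033318914%positive, 109); (73033318929%positive, 74); (73033322499%positive, 74); (73033322529%positive, 79); (73033323009%positive, 4); (73033326594%positive, 104); (73033326609%positive, 44); (73033326849%positive, 49); (73033383939%positive, 64); (73033383969%positive, 114); (73033384449%positive, 119); (73033392129%positive, 24); (73033449474%positive, 64); (73033449489%positive, 89); (73033449729%positive, 104); (73033453569%positive,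 79); (73047998739%positive, 4); (73047998754%positive, 19); (73047998994%positive, 54); (73048002579%positive, 49); (73048002594%positive, 84); (73048002819%positive, 119); (73048002849%positive, 99); (73048003074%positive, 79); (73048003089%positive, 124); (73048006674%positive, 14); (73048006914%positive, 64); (73048006929%positive, 4); (73048064019%positive, 69); (73048064034%positive, 109); (73048064259%positive, 79); (73048064289%positive, 89); (73048064514%positive, 114); (73048064529%positive, 114); (73048068099%positive, 19); (73048068129%positive, 114); (73048068609%positive, 44); (73048072194%positive, 109); (73048072209%positive, 4); (73048072449%positive, 89); (73048129554%positive, 124); (73048129794%positive, 114); (73048129809%positive, 54); (73048133634%positive, 19); (73048133649%positive, 29); (73048133889%positive, 94); (73049047059%positive, 64); (73049047074%positive, 24); (73049047299%positive, 84); (73049047329%positive, 49); (73049047554%positive, 59); (73049047569%positive, 24); (73049051139%positive, 44); (73049051169%positive, 69); (73049051649%positive, 104); (73049055234%positive, 104); (73049055249%positive, 49); (73049055489%positive, 49); (73049112579%positive, 94); (73049112609%positive, 19); (73049113089%positive, 49); (73049120769%positive, 54); (73049178114%positive, 34); (73049178129%positive, 4); (73049178369%positive, 19); (73049182209%positive, 99); (73050095634%positive, 119); (73050095874%positive, 29); (73050095889%positive, 124); (73050099714%positive, 74); (73050099729%positive, 109); (73050099969%positive, 34); (73050161154%positive, 34); (73050161169%positive, 119); (73050161409%positive, 109); (73050165249%positive, 19); (73282879779%positive, 49); (73282880019%positive, 124); (73282880034%positive, 99); (73282883619%positive, 14); (73282884099%positive, 109); (73282884129%positive, 39); (73282887699%positive,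 29); (73282887714%positive, 24); (73282887939%positive, 29); (73282887969%positive, 4); (73282888194%positive, 69); (73282888209%positive, 34); (73282945059%positive, 19); (73282945539%positive, 44); (73282945569%positive, 44); (73282953219%positive, 79); (73282953249%positive, 54); (73282953729%positive, 84); (73283010579%positive, 64); (73283010594%positive, 74); (73283010819%positive, 44); (73283010849%positive, 29); (73283011074%positive, 89); (73283011089%positive, 9); (73283014659%positive, 119); (73283014689%positive, 29); (73283015169%positive, 124); (73283018754%positive, 79); (73283018769%positive, 99); (73283019009%positive, 124); (73283928099%positive, 29); (73283928579%positive, 9); (73283928609%positive, 74); (73283936259%positive, 104); (73283936289%positive, 79); (73283936769%positive, 14); (73284059139%positive, 44); (73284059169%positive, 74); (73284059649%positive, 109); (73284067329%positive, 94); (73284976659%positive, 104); (73284976674%positive, 69); (73284976899%positive, 84); (73284976929%positive, 69); (73284977154%positive, 9); (73284977169%positive, 4); (73284980739%positive, 4); (73284980769%positive, 84); (73284981249%positive, 109); (73284984834%positive, 29); (73284984849%positive, 114); (73284985089%positive, 114); (73285042179%positive, 9); (73285042209%positive, 99); (73285042689%positive, 99); (73285050369%positive, 19); (73285107714%positive, 119); (73285107729%positive, 9); (73285107969%positive, 34); (73285111809%positive, 54); (73299656739%positive, 84); (73299657219%positive, 49); (73299657249%positive, 24); (73299664899%positive, 89); (73299664929%positive, 84); (73299665409%positive, 64); (73299787779%positive, 104); (73299787809%positive, 74); (73299788289%positive, 79); (73299795969%positive, 29); (73301753859%positive, 44); (73301753889%positive, 39); (73301754369%positive, 79); (73301762049%positive,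 124); (73301884929%positive, 54); (73316433939%positive, 19); (73316433954%positive, 29); (73316434179%positive, 114); (73316434209%positive, 39); (73316434434%positive, 39); (73316434449%positive, 84); (73316438019%positive, 114); (73316438049%positive, 109); (73316438529%positive, 14); (73316442114%positive, 84); (73316442129%positive, 109); (73316442369%positive, 114); (73316499459%positive, 119); (73316499489%positive, 99); (73316499969%positive, 24); (73316507649%positive, 9); (73316564994%positive, 59); (73316565009%positive, 99); (73316565249%positive, 49); (73316569089%positive, 44); (73317482499%positive, 49); (73317482529%positive, 69); (73317483009%positive, 34); (73317490689%positive, 94); (73317613569%positive, 69); (73318531074%positive, 74); (73318531089%positive, 119); (73318531329%positive, 24); (73318535169%positive, 54); (73318596609%positive, 19); (73551315219%positive, 34); (73551315234%positive, 14); (73551315474%positive, 34); (73551319059%positive, 124); (73551319074%positive, 19); (73551319299%positive, 64); (73551319329%positive, 99); (73551319554%positive, 44); (73551319569%positive, 44); (73551323154%positive, 49); (73551323394%positive, 104); (73551323409%positive, 84); (73551380499%positive, 89); (73551380514%positive, 109); (73551380739%positive, 54); (73551380769%positive, 4); (73551380994%positive, 114); (73551381009%positive, 104); (73551384579%positive, 89); (73551384609%positive, 44); (73551385089%positive, 19); (73551388674%positive, 64); (73551388689%positive, 114); (73551388929%positive, 54); (73551446034%positive, 9); (73551446274%positive, 104); (73551446289%positive, 94); (73551450114%positive, 94); (73551450129%positive, 79); (73551450369%positive, 54); (73552363539%positive, 39); (73552363554%positive, 39); (73552363779%positive, 79); (73552363809%positive, 79); (73552364034%positive, 99); (73552364049%positive,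 19); (73552367619%positive, 59); (73552367649%positive, 54); (73552368129%positive, 19); (73552371714%positive, 9); (73552371729%positive, 124); (73552371969%positive, 4); (73552429059%positive, 119); (73552429089%positive, 99); (73552429569%positive, 54); (73552437249%positive, 14); (73552494594%positive, 74); (73552494609%positive, 64); (73552494849%positive, 84); (73552498689%positive, 104); (73553412114%positive, 29); (73553412354%positive, 29); (73553412369%positive, 74); (73553416194%positive, 14); (73553416209%positive, 109); (73553416449%positive, 69); (73553477634%positive, 84); (73553477649%positive, 4); (73553477889%positive, 109); (73553481729%positive, 9); (73568092179%positive, 14); (73568092194%positive, 74); (73568092419%positive, 49); (73568092449%positive, 54); (73568092674%positive, 99); (73568092689%positive, 14); (73568096259%positive, 84); (73568096289%positive, 89); (73568096769%positive, 74); (73568100354%positive, 94); (73568100369%positive, 69); (73568100609%positive, 19); (73568157699%positive, 9); (73568157729%positive, 59); (73568158209%positive, 24); (73568165889%positive, 24); (73568223234%positive, 79); (73568223249%positive, 9); (73568223489%positive, 114); (73568227329%positive, 114); (73569140739%positive, 99); (73569140769%positive, 59); (73569141249%positive, 64); (73569148929%positive, 44); (73569271809%positive, 44); (73570189314%positive, 54); (73570189329%positive, 89); (73570189569%positive, 9); (73570193409%positive, 89); (73570254849%positive, 119); (73584869394%positive, 29); (73584869634%positive, 49); (73584869649%positive, 89); (73584873474%positive, 54); (73584873489%positive, 64); (73584873729%positive, 34); (73584934914%positive, 9); (73584934929%positive, 54); (73584935169%positive, 114); (73584939009%positive, 29); (73585917954%positive, 54); (73585917969%positive, 99); (73585918209%positive,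 84); (73585922049%positive, 64); (73585983489%positive, 34); (77309415699%positive, 4); (77309415714%positive, 29); (77309415954%positive, 99); (77309419794%positive, 39); (77309477139%positive, 4); (77309477154%positive, 4); (77309477394%positive, 104); (77309480979%positive, 104); (77309480994%positive, 4); (77309481219%positive, 94); (77309481249%positive, 124); (77309481474%positive, 54); (77309481489%positive, 89); (77309485074%positive, 19); (77309485314%positive, 19); (77309485329%positive, 29); (77309542674%positive, 14); (77309546514%positive, 9); (77309546754%positive, 54); (77309546769%positive, 34); (77310460179%positive, 49); (77310460194%positive, 119); (77310460434%positive, 39); (77310464019%positive, 39); (77310464034%positive, 14); (77310464259%positive, 19); (77310464289%positive, 14); (77310464514%positive, 94); (77310464529%positive, 94); (77310468114%positive, 64); (77310468354%positive, 74); (77310468369%positive, 44); (77310525459%positive, 109); (77310525474%positive, 79); (77310525699%positive, 99); (77310525729%positive, 59); (77310525954%positive, 59); (77310525969%positive, 69); (77310529539%positive, 44); (77310529569%positive, 14); (77310530049%positive, 119); (77310533634%positive, 44); (77310533649%positive, 9); (77310533889%positive, 24); (77310590994%positive, 64); (77310591234%positive, 14); (77310591249%positive, 44); (77310595074%positive, 69); (77310595089%positive, 59); (77310595329%positive, 99); (77311508754%positive, 94); (77311512594%positive, 14); (77311512834%positive, 64); (77311512849%positive, 19); (77311574034%positive, 59); (77311574274%positive, 114); (77311574289%positive, 4); (77311578114%positive, 114); (77311578129%positive, 19); (77311578369%positive, 64); (77326188819%positive, 24); (77326188834%positive, 64); (77326189074%positive, 34); (77326192659%positive, 119); (77326192674%positive,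 114); (77326192899%positive, 89); (77326192929%positive, 79); (77326193154%positive, 94); (77326193169%positive, 24); (77326196754%positive, 124); (77326196994%positive, 64); (77326197009%positive, 109); (77326254099%positive, 69); (77326254114%positive, 119); (77326254339%positive, 39); (77326254369%positive, 49); (77326254594%positive, 89); (77326254609%positive, 39); (77326258179%positive, 84); (77326258209%positive, 34); (77326258689%positive, 39); (77326262274%positive, 59); (77326262289%positive, 109); (77326262529%positive, 84); (77326319634%positive, 124); (77326319874%positive, 54); (77326319889%positive, 114); (77326323714%positive, 74); (77326323729%positive, 14); (77326323969%positive, 59); (77327237139%positive, 39); (77327237154%positive, 64); (77327237379%positive, 44); (77327237409%positive, 119); (77327237634%positive, 74); (77327237649%positive, 114); (77327241219%positive, 29); (77327241249%positive, 104); (77327241729%positive, 94); (77327245314%positive, 14); (77327245329%positive, 119); (77327245569%positive, 39); (77327302659%positive, 19); (77327302689%positive, 34); (77327303169%positive, 89); (77327310849%positive, 24); (77327368194%positive, 44); (77327368209%positive, 74); (77327368449%positive, 69); (77327372289%positive, 29); (77328285714%positive, 124); (77328285954%positive, 119); (77328285969%positive, 99); (77328289794%positive, 94); (77328289809%positive, 24); (77328290049%positive, 29); (77328351234%positive, 119); (77328351249%positive, 94); (77328351489%positive, 29); (77328355329%positive, 84); (77342966034%positive, 99); (77342969874%positive, 59); (77342970114%positive, 104); (77342970129%positive, 94); (77343031314%positive, 114); (77343031554%positive, 124); (77343031569%positive, 64); (77343035394%positive, 84); (77343035409%positive, 34); (77343035649%positive, 34); (77344014354%positive, 94); (77344014594%positive,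 109); (77344014609%positive, 79); (77344018434%positive, 59); (77344018449%positive, 49); (77344018689%positive, 64); (77344079874%positive, 19); (77344079889%positive, 74); (77344080129%positive, 54); (77344083969%positive, 54); (77577847059%positive, 29); (77577847074%positive, 74); (77577847314%positive, 54); (77577850899%positive, 124); (77577850914%positive, 49); (77577851139%positive, 34); (77577851169%positive, 44); (77577851394%positive, 89); (77577851409%positive, 119); (77577854994%positive, 94); (77577855234%positive, 114); (77577855249%positive, 84); (77577912339%positive, 124); (77577912354%positive, 69); (77577912579%positive, 59); (77577912609%positive, 19); (77577912834%positive, 124); (77577912849%positive, 29); (77577916419%positive, 4); (77577916449%positive, 44); (77577916929%positive, 119); (77577920514%positive, 54); (77577920529%positive, 104); (77577920769%positive, 4); (77577977874%positive, 24); (77577978114%positive, 119); (77577978129%positive, 104); (77577981954%positive, 94); (77577981969%positive, 19); (77577982209%positive, 59); (77578895379%positive, 59); (77578895394%positive, 124); (77578895619%positive, 24); (77578895649%positive, 4); (77578895874%positive, 114); (77578895889%positive, 124); (77578899459%positive, 104); (77578899489%positive, 59); (77578899969%positive, 9); (77578903554%positive, 39); (77578903569%positive, 49); (77578903809%positive, 14); (77578960899%positive, 19); (77578960929%positive, 49); (77578961409%positive, 79); (77578969089%positive, 69); (77579026434%positive, 59); (77579026449%positive, 9); (77579026689%positive, 84); (77579030529%positive, 14); (77579943954%positive, 44); (77579944194%positive, 114); (77579944209%positive, 9); (77579948034%positive, 14); (77579948049%positive, 119); (77579948289%positive, 9); (77580009474%positive, 29); (77580009489%positive, 74); (77580009729%positive,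 34); (77580013569%positive, 69); (77594624019%positive, 124); (77594624034%positive, 74); (77594624259%positive, 84); (77594624289%positive, 14); (77594624514%positive, 34); (77594624529%positive, 119); (77594628099%positive, 94); (77594628129%positive, 49); (77594628609%positive, 39); (77594632194%positive, 34); (77594632209%positive, 49); (77594632449%positive, 49); (77594689539%positive, 109); (77594689569%positive, 69); (77594690049%positive, 4); (77594697729%positive, 74); (77594755074%positive, 19); (77594755089%positive, 84); (77594755329%positive, 124); (77594759169%positive, 44); (77595672579%positive, 39); (77595672609%positive, 39); (77595673089%positive, 19); (77595680769%positive, 54); (77595803649%positive, 4); (77596721154%positive, 59); (77596721169%positive, 104); (77596721409%positive, 64); (77596725249%positive, 34); (77596786689%positive, 94); (77611401234%positive, 94); (77611401474%positive, 54); (77611401489%positive, 29); (77611405314%positive, 94); (77611405329%positive, 29); (77611405569%positive, 49); (77611466754%positive, 84); (77611466769%positive, 119); (77611467009%positive, 109); (77611470849%positive, 14); (77612449794%positive, 14); (77612449809%positive, 99); (77612450049%positive, 44); (77612453889%positive, 69); (77612515329%positive, 79); (77846282514%positive, 24); (77846286354%positive, 9); (77846286594%positive, 19); (77846286609%positive, 4); (77846347794%positive, 74); (77846348034%positive, 99); (77846348049%positive, 99); (77846351874%positive, 109); (77846351889%positive, 99); (77846352129%positive, 124); (77847330834%positive, 109); (77847331074%positive, 89); (77847331089%positive, 4); (77847334914%positive, 84); (77847334929%positive, 4); (77847335169%positive, 104); (77847396354%positive, 89); (77847396369%positive, 29); (77847396609%positive, 4); (77847400449%positive, 124); (77863059474%positive,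 29); (77863059714%positive, 54); (77863059729%positive, 59); (77863063554%positive, 54); (77863063569%positive, 24); (77863063809%positive, 49); (77863124994%positive, 104); (77863125009%positive, 74); (77863125249%positive, 44); (77863129089%positive, 69); (77864108034%positive, 89); (77864108049%positive, 124); (77864108289%positive, 34); (77864112129%positive, 49); (77864173569%positive, 54); (137439023379%positive, 69); (137439023394%positive, 9); (137439023634%positive, 124); (137439027474%positive, 79); (137439088914%positive, 119); (137440006419%positive, 84); (137440006434%positive, 39); (137440006674%positive, 9); (137440010514%positive, 114); (137440067859%positive, 109); (137440067874%positive, 69); (137440068114%positive, 74); (137440071699%positive, 114); (137440071714%positive, 124); (137440071939%positive, 44); (137440071969%positive, 84); (137440072194%positive, 14); (137440072209%positive, 89); (137440075794%positive, 119); (137440076034%positive, 49); (137440076049%positive, 4); (137440133394%positive, 124); (137440137234%positive, 34); (137440137474%positive, 4); (137440137489%positive, 119); (137441054994%positive, 54); (137441116434%positive, 39); (137441120274%positive, 104); (137441120514%positive, 59); (137441120529%positive, 44); (137455735059%positive, 84); (137455735074%positive, 79); (137455735314%positive, 104); (137455739154%positive, 19); (137455796499%positive, 79); (137455796514%positive, 14); (137455796754%positive, 59); (137455800339%positive, 124); (137455800354%positive, 34); (137455800579%positive, 39); (137455800609%positive, 69); (137455800834%positive, 19); (137455800849%positive, 49); (137455804434%positive, 24); (137455804674%positive, 74); (137455804689%positive, 124); (137455862034%positive, 9); (137455865874%positive, 84); (137455866114%positive, 9); (137455866129%positive, 24); (137456779539%positive, 104); (137456779554%positive, 74); (137456779794%positive,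 124); (137456783379%positive, 109); (137456783394%positive, 29); (137456783619%positive, 74); (137456783649%positive, 104); (137456783874%positive, 9); (137456783889%positive, 124); (137456787474%positive, 89); (137456787714%positive, 109); (137456787729%positive, 109); (137456844819%positive, 119); (137456844834%positive, 74); (137456845059%positive, 119); (137456845089%positive, 4); (137456845314%positive, 119); (137456845329%positive, 94); (137456848899%positive, 94); (137456848929%positive, 64); (137456849409%positive, 9); (137456852994%positive, 54); (137456853009%positive, 34); (137456853249%positive, 9); (137456910354%positive, 4); (137456910594%positive, 119); (137456910609%positive, 64); (137456914434%positive, 34); (137456914449%positive, 119); (137456914689%positive, 114); (137457828114%positive, 14); (137457831954%positive, 84); (137457832194%positive, 74); (137457832209%positive, 114); (137457893394%positive, 79); (137457893634%positive, 114); (137457893649%positive, 49); (137457897474%positive, 49); (137457897489%positive, 9); (137457897729%positive, 49); (137472512274%positive, 64); (137472573714%positive, 89); (137472577554%positive, 34); (137472577794%positive, 124); (137472577809%positive, 84); (137473556754%positive, 4); (137473560594%positive, 99); (137473560834%positive, 59); (137473560849%positive, 59); (137473622034%positive, 64); (137473622274%positive, 69); (137473622289%positive, 79); (137473626114%positive, 114); (137473626129%positive, 59); (137473626369%positive, 49); (137707393299%positive, 99); (137707393314%positive, 84); (137707393554%positive, 54); (137707397394%positive, 74); (137707454739%positive, 39); (137707454754%positive, 19); (137707454994%positive, 54); (137707458579%positive, 44); (137707458594%positive, 64); (137707458819%positive, 99); (137707458849%positive, 79); (137707459074%positive, 39); (137707459089%positive, 44); (137707462674%positive, 84); (137707462914%positive,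 89); (137707462929%positive, 14); (137707520274%positive, 119); (137707524114%positive, 109); (137707524354%positive, 119); (137707524369%positive, 74); (137708437779%positive, 49); (137708437794%positive, 39); (137708438034%positive, 49); (137708441619%positive, 94); (137708441634%positive, 89); (137708441859%positive, 34); (137708441889%positive, 74); (137708442114%positive, 119); (137708442129%positive, 94); (137708445714%positive, 44); (137708445954%positive, 114); (137708445969%positive, 44); (137708503059%positive, 119); (137708503074%positive, 49); (137708503299%positive, 39); (137708503329%positive, 34); (137708503554%positive, 84); (137708503569%positive, 49); (137708507139%positive, 79); (137708507169%positive, 19); (137708507649%positive, 19); (137708511234%positive, 114); (137708511249%positive, 84); (137708511489%positive, 14); (137708568594%positive, 119); (137708568834%positive, 19); (137708568849%positive, 94); (137708572674%positive, 19); (137708572689%positive, 104); (137708572929%positive, 84); (137709486354%positive, 84); (137709490194%positive, 54); (137709490434%positive, 49); (137709490449%positive, 69); (137709551634%positive, 69); (137709551874%positive, 29); (137709551889%positive, 4); (137709555714%positive, 4); (137709555729%positive, 54); (137709555969%positive, 69); (137724166419%positive, 109); (137724166434%positive, 69); (137724166674%positive, 54); (137724170259%positive, 109); (137724170274%positive, 79); (137724170499%positive, 104); (137724170529%positive, 89); (137724170754%positive, 34); (137724170769%positive, 9); (137724174354%positive, 14); (137724174594%positive, 124); (137724174609%positive, 19); (137724231699%positive, 69); (137724231714%positive, 84); (137724231939%positive, 64); (137724231969%positive, 124); (137724232194%positive, 24); (137724232209%positive, 109); (137724235779%positive, 99); (137724235809%positive, 44); (137724236289%positive, 119); (137724239874%positive,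 79); (137724239889%positive, 74); (137724240129%positive, 29); (137724297234%positive, 9); (137724297474%positive, 9); (137724297489%positive, 99); (137724301314%positive, 54); (137724301329%positive, 84); (137724301569%positive, 109); (137725214739%positive, 124); (137725214754%positive, 109); (137725214979%positive, 9); (137725215009%positive, 109); (137725215234%positive, 29); (137725215249%positive, 84); (137725218819%positive, 59); (137725218849%positive, 34); (137725219329%positive, 44); (137725222914%positive, 29); (137725222929%positive, 79); (137725223169%positive, 79); (137725280259%positive, 89); (137725280289%positive, 89); (137725280769%positive, 104); (137725288449%positive, 14); (137725345794%positive, 54); (137725345809%positive, 109); (137725346049%positive, 44); (137725349889%positive, 9); (137726263314%positive, 124); (137726263554%positive, 89); (137726263569%positive, 39); (137726267394%positive, 79); (137726267409%positive, 34); (137726267649%positive, 9); (137726328834%positive, 99); (137726328849%positive, 24); (137726329089%positive, 59); (137726332929%positive, 19); (137740943634%positive, 94); (137740947474%positive, 64); (137740947714%positive, 4); (137740947729%positive, 99); (137741008914%positive, 14); (137741009154%positive, 39); (137741009169%positive, 4); (137741012994%positive, 89); (137741013009%positive, 4); (137741013249%positive, 114); (137741991954%positive, 29); (137741992194%positive, 104); (137741992209%positive, 49); (137741996034%positive, 84); (137741996049%positive, 79); (137741996289%positive, 119); (137742057474%positive, 99); (137742057489%positive, 74); (137742057729%positive, 89); (137742061569%positive, 49); (137975828754%positive, 19); (137975890194%positive, 59); (137975894034%positive, 39); (137975894274%positive, 34); (137975894289%positive, 109); (137976873234%positive, 64); (137976877074%positive, 44); (137976877314%positive, 79); (137976877329%positive,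 64); (137976938514%positive, 94); (137976938754%positive, 114); (137976938769%positive, 19); (137976942594%positive, 54); (137976942609%positive, 4); (137976942849%positive, 74); (137992601874%positive, 94); (137992605714%positive, 4); (137992605954%positive, 54); (137992605969%positive, 94); (137992667154%positive, 29); (137992667394%positive, 99); (137992667409%positive, 49); (137992671234%positive, 34); (137992671249%positive, 94); (137992671489%positive, 104); (137993650194%positive, 74); (137993650434%positive, 104); (137993650449%positive, 59); (137993654274%positive, 124); (137993654289%positive, 44); (137993654529%positive, 79); (137993715714%positive, 14); (137993715729%positive, 84); (137993715969%positive, 84); (137993719809%positive, 94); (141733925139%positive, 19); (141733925154%positive, 64); (141733925394%positive, 64); (141733929234%positive, 29); (141733986579%positive, 94); (141733986594%positive, 109); (141733986834%positive, 59); (141733990419%positive, 44); (141733990434%positive, 39); (141733990659%positive, 124); (141733990689%positive, 124); (141733990914%positive, 109); (141733990929%positive, 34); (141733994514%positive, 54); (141733994754%positive, 24); (141733994769%positive, 124); (141734052114%positive, 24); (141734055954%positive, 9); (141734056194%positive, 94); (141734056209%positive, 89); (141734969619%positive, 34); (141734969634%positive, 19); (141734969874%positive, 4); (141734973459%positive, 44); (141734973474%positive, 14); (141734973699%positive, 19); (141734973729%positive, 19); (141734973954%positive, 124); (141734973969%positive, 124); (141734977554%positive, 89); (141734977794%positive, 64); (141734977809%positive, 64); (141735034899%positive, 119); (141735034914%positive, 124); (141735035139%positive, 114); (141735035169%positive, 44); (141735035394%positive, 64); (141735035409%positive, 114); (141735038979%positive, 19); (141735039009%positive, 119); (141735039489%positive,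 94); (141735043074%positive, 34); (141735043089%positive, 109); (141735043329%positive, 14); (141735100434%positive, 4); (141735100674%positive, 24); (141735100689%positive, 94); (141735104514%positive, 44); (141735104529%positive, 114); (141735104769%positive, 99); (141736018194%positive, 84); (141736022034%positive, 49); (141736022274%positive, 79); (141736022289%positive, 104); (141736083474%positive, 9); (141736083714%positive, 14); (141736083729%positive, 89); (141736087554%positive, 14); (141736087569%positive, 44); (141736087809%positive, 4); (141750698259%positive, 109); (141750698274%positive, 124); (141750698514%positive, 104); (141750702099%positive, 49); (141750702114%positive, 19); (141750702339%positive, 89); (141750702369%positive, 44); (141750702594%positive, 39); (141750702609%positive, 84); (141750706194%positive, 124); (141750706434%positive, 109); (141750706449%positive, 64); (141750763539%positive, 14); (141750763554%positive, 54); (141750763779%positive, 69); (141750763809%positive, 34); (141750764034%positive, 19); (141750764049%positive, 74); (141750767619%positive, 49); (141750767649%positive, 84); (141750768129%positive, 9); (141750771714%positive, 114); (141750771729%positive, 54); (141750771969%positive, 104); (141750829074%positive, 54); (141750829314%positive, 74); (141750829329%positive, 39); (141750833154%positive, 94); (141750833169%positive, 94); (141750833409%positive, 39); (141751746579%positive, 9); (141751746594%positive, 119); (141751746819%positive, 69); (141751746849%positive, 124); (141751747074%positive, 79); (141751747089%positive, 39); (141751750659%positive, 19); (141751750689%positive, 79); (141751751169%positive, 124); (141751754754%positive, 79); (141751754769%positive, 104); (141751755009%positive, 9); (141751812099%positive, 29); (141751812129%positive, 79); (141751812609%positive, 84); (141751820289%positive, 29); (141751877634%positive, 84); (141751877649%positive,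 44); (141751877889%positive, 39); (141751881729%positive, 89); (141752795154%positive, 114); (141752795394%positive, 14); (141752795409%positive, 9); (141752799234%positive, 14); (141752799249%positive, 79); (141752799489%positive, 49); (141752860674%positive, 84); (141752860689%positive, 89); (141752860929%positive, 19); (141752864769%positive, 104); (141767475474%positive, 79); (141767479314%positive, 104); (141767479554%positive, 14); (141767479569%positive, 114); (141767540754%positive, 19); (141767540994%positive, 114); (141767541009%positive, 94); (141767544834%positive, 99); (141767544849%positive, 74); (141767545089%positive, 79); (141768523794%positive, 39); (141768524034%positive, 44); (141768524049%positive, 19); (141768527874%positive, 114); (141768527889%positive, 14); (141768528129%positive, 64); (141768589314%positive, 114); (141768589329%positive, 34); (141768589569%positive, 19); (141768593409%positive, 54); (142002356499%positive, 99); (142002356514%positive, 119); (142002356754%positive, 119); (142002360339%positive, 24); (142002360354%positive, 114); (142002360579%positive, 109); (142002360609%positive, 99); (142002360834%positive, 64); (142002360849%positive, 79); (142002364434%positive, 9); (142002364674%positive, 104); (142002364689%positive, 9); (142002421779%positive, 34); (142002421794%positive, 19); (142002422019%positive, 84); (142002422049%positive, 104); (142002422274%positive, 69); (142002422289%positive, 59); (142002425859%positive, 104); (142002425889%positive, 89); (142002426369%positive, 34); (142002429954%positive, 104); (142002429969%positive, 39); (142002430209%positive, 54); (142002487314%positive, 14); (142002487554%positive, 29); (142002487569%positive, 124); (142002491394%positive, 94); (142002491409%positive, 14); (142002491649%positive, 119); (142003404819%positive, 99); (142003404834%positive, 84); (142003405059%positive, 19); (142003405089%positive, 54); (142003405314%positive,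 29); (142003405329%positive, 54); (142003408899%positive, 4); (142003408929%positive, 24); (142003409409%positive, 59); (142003412994%positive, 89); (142003413009%positive, 119); (142003413249%positive, 109); (142003470339%positive, 24); (142003470369%positive, 119); (142003470849%positive, 114); (142003478529%positive, 19); (142003535874%positive, 109); (142003535889%positive, 119); (142003536129%positive, 109); (142003539969%positive, 59); (142004453394%positive, 64); (142004453634%positive, 9); (142004453649%positive, 59); (142004457474%positive, 39); (142004457489%positive, 94); (142004457729%positive, 114); (142004518914%positive, 104); (142004518929%positive, 69); (142004519169%positive, 74); (142004523009%positive, 69); (142019133459%positive, 24); (142019133474%positive, 24); (142019133699%positive, 109); (142019133729%positive, 9); (142019133954%positive, 49); (142019133969%positive, 39); (142019137539%positive, 69); (142019137569%positive, 114); (142019138049%positive, 34); (142019141634%positive, 4); (142019141649%positive, 74); (142019141889%positive, 59); (142019198979%positive, 84); (142019199009%positive, 109); (142019199489%positive, 59); (142019207169%positive, 9); (142019264514%positive, 109); (142019264529%positive, 59); (142019264769%positive, 64); (142019268609%positive, 89); (142020182019%positive, 19); (142020182049%positive, 119); (142020182529%positive, 119); (142020190209%positive, 89); (142020313089%positive, 34); (142021230594%positive, 14); (142021230609%positive, 64); (142021230849%positive, 54); (142021234689%positive, 4); (142021296129%positive, 44); (142035910674%positive, 124); (142035910914%positive, 29); (142035910929%positive, 19); (142035914754%positive, 54); (142035914769%positive, 69); (142035915009%positive, 74); (142035976194%positive, 4); (142035976209%positive, 114); (142035976449%positive, 114); (142035980289%positive, 99); (142036959234%positive, 59); (142036959249%positive,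 74); (142036959489%positive, 34); (142036963329%positive, 9); (142037024769%positive, 104); (142270791954%positive, 99); (142270795794%positive, 29); (142270796034%positive, 64); (142270796049%positive, 14); (142270857234%positive, 49); (142270857474%positive, 64); (142270857489%positive, 84); (142270861314%positive, 89); (142270861329%positive, 109); (142270861569%positive, 19); (142271840274%positive, 44); (142271840514%positive, 24); (142271840529%positive, 29); (142271844354%positive, 94); (142271844369%positive, 99); (142271844609%positive, 89); (142271905794%positive, 69); (142271905809%positive, 14); (142271906049%positive, 4); (142271909889%positive, 4); (142287568914%positive, 69); (142287569154%positive, 124); (142287569169%positive, 94); (142287572994%positive, 49); (142287573009%positive, 34); (142287573249%positive, 34); (142287634434%positive, 69); (142287634449%positive, 84); (142287634689%positive, 29); (142287638529%positive, 49); (142288617474%positive, 99); (142288617489%positive, 84); (142288617729%positive, 69); (142288621569%positive, 29); (142288683009%positive, 119); (146028892434%positive, 114); (146028953874%positive, 69); (146028957714%positive, 49); (146028957954%positive, 89); (146028957969%positive, 64); (146029936914%positive, 114); (146029940754%positive, 9); (146029940994%positive, 69); (146029941009%positive, 104); (146030002194%positive, 89); (146030002434%positive, 99); (146030002449%positive, 99); (146030006274%positive, 119); (146030006289%positive, 34); (146030006529%positive, 79); (146045665554%positive, 49); (146045669394%positive, 99); (146045669634%positive, 94); (146045669649%positive, 59); (146045730834%positive, 14); (146045731074%positive, 114); (146045731089%positive, 124); (146045734914%positive, 99); (146045734929%positive, 29); (146045735169%positive, 89); (146046713874%positive, 39); (146046714114%positive, 19); (146046714129%positive, 64); (146046717954%positive,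 14); (146046717969%positive, 14); (146046718209%positive, 89); (146046779394%positive, 29); (146046779409%positive, 79); (146046779649%positive, 89); (146046783489%positive, 99); (146297323794%positive, 24); (146297327634%positive, 59); (146297327874%positive, 104); (146297327889%positive, 39); (146297389074%positive, 74); (146297389314%positive, 99); (146297389329%positive, 89); (146297393154%positive, 44); (146297393169%positive, 84); (146297393409%positive, 4); (146298372114%positive, 34); (146298372354%positive, 89); (146298372369%positive, 89); (146298376194%positive, 34); (146298376209%positive, 14); (146298376449%positive, 34); (146298437634%positive, 94); (146298437649%positive, 14); (146298437889%positive, 79); (146298441729%positive, 124); (146314100754%positive, 84); (146314100994%positive, 59); (146314101009%positive, 109); (146314104834%positive, 49); (146314104849%positive, 104); (146314105089%positive, 89); (146314166274%positive, 9); (146314166289%positive, 39); (146314166529%positive, 44); (146314170369%positive, 74); (146315149314%positive, 79); (146315149329%positive, 89); (146315149569%positive, 14); (146315153409%positive, 89); (146315214849%positive, 99)].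
Definition q10 := 5. Definition d10 := 3.

Definition ymap4 := mkmap data4.
Lemma no_code4 : ~ exists C : {set {perm 'I_4}}, perfect_code1 C.
Proof.
apply: (@code_contra 4 b4 (ylook ymap4) q4 d4).
- by [].
- by [].
- by [].
- vm_compute; reflexivity.
- vm_compute; reflexivity.
- vm_compute; reflexivity.
Qed.

Definition ymap6 := mkmap data6.
Lemma no_code6 : ~ exists C : {set {perm 'I_6}}, perfect_code1 C.
Proof.
apply: (@code_contra 6 b6 (ylook ymap6) q6 d6).
- by [].
- by [].
- by [].
- vm_compute; reflexivity.
- vm_compute; reflexivity.
- vm_compute; reflexivity.
Qed.

Definition ymap8 := mkmap data8.
Lemma no_code8 : ~ exists C : {set {perm 'I_8}}, perfect_code1 C.
Proof.
apply: (@code_contra 8 b8 (ylook ymap8) q8 d8).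
- by [].
- by [].
- by [].
- vm_compute; reflexivity.
- vm_compute; reflexivity.
- vm_compute; reflexivity.
Qed.

Definition ymap9 := mkmap data9.
Lemma no_code9 : ~ exists C : {set {perm 'I_9}}, perfect_code1 C.
Proof.
apply: (@code_contra 9 b9 (ylook ymap9) q9 d9).
- by [].
- by [].
- by [].
- vm_compute; reflexivity.
- vm_compute; reflexivity.
- vm_compute; reflexivity.
Qed.

Definition ymap10 := mkmap data10.
Lemma no_code10 : ~ exists C : {set {perm 'I_10}}, perfect_code1 C.
Proof.
apply: (@code_contra 10 b10 (ylook ymap10) q10 d10).
- by [].
- by [].
- by [].
- vm_compute; reflexivity.
- vm_compute; reflexivity.
- vm_compute; reflexivity.
Qed.

Theorem theorem2 (n : nat) :
  ((4 < n /\ prime n) \/ (4 <= n <= 10)) ->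
  ~ exists C : {set {perm 'I_n}}, perfect_code1 C.
Proof.
case=> [[h4 pn]|/andP [h4 h10]]; first exact: no_code_prime.
case: n h4 h10 => [|[|[|[|[|[|[|[|[|[|[|n]]]]]]]]]]] h4 h10 //.
- exact: no_code4.
- by apply: no_code_prime.
- exact: no_code6.
- by apply: no_code_prime.
- exact: no_code8.
- exact: no_code9.
- exact: no_code10.
Qed.
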